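(* Let $Q$ be as in the context and let $\mathscr B(Q)$ be the collection of all (pairwise distinct) sets $\mathfrak B_\varphi(Q)$, $\varphi$ a scale function, partially ordered by inclusion. Then $(\mathscr B(Q),\subseteq)$ is a lattice, and for all scale functions $\varphi_1,\varphi_2$: (i) $\mathfrak B_{\max(\varphi_1,\varphi_2)}(Q)=\mathfrak B_{\varphi_1}(Q)\cup\mathfrak B_{\varphi_2}(Q)$, and this set is the least element of $\mathscr B(Q)$ containing both $\mathfrak B_{\varphi_1}(Q)$ and $\mathfrak B_{\varphi_2}(Q)$; (ii) $\mathfrak B_{\min(\varphi_1,\varphi_2)}(Q)$ is the greatest element of $\mathscr B(Q)$ contained in both $\mathfrak B_{\varphi_1}(Q)$ and $\mathfrak B_{\varphi_2}(Q)$; in particular $\mathfrak B_{\min(\varphi_1,\varphi_2)}(Q)\subseteq\mathfrak B_{\varphi_1}(Q)\cap\mathfrak B_{\varphi_2}(Q)$.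
   Context: $\mathbb F\in\{\mathbb R,\mathbb C\}$. $A$ is an infinite-dimensional separable Banach space over $\mathbb F$ and $V_0\subsetneq V_1\subsetneq\cdots\subset A$ are finite-dimensional subspaces whose union $V$ is dense in $A$. $B$ is a Banach space over $\mathbb F$, $\alpha$ a reasonable crossnorm on $A\otimes B$, $A\hat\otimes_\alpha B$ the completion, $Q=((A,V);B;\alpha)$. For $x\in A\hat\otimes_\alpha B$, $E_n(x):=\inf_{h\in V_n\otimes B}\|x-h\|$. A scale function is a nonincreasing $\varphi:\mathbb N\to(0,\infty)$ with $\varphi(n)\to0$. $\mathfrak B_\varphi(Q)=\{x:\liminf_{n\to\infty}(E_n(x))^{\varphi(n)}<1\}$. *)

(* Defs.v *)
From Stdlib Require Import Reals Lra List ClassicalEpsilon.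
Open Scope R_scope.

Record Cplx := mkC { cre : R; cim : R }.
Definition Cadd (z w : Cplx) := mkC (cre z + cre w) (cim z + cim w).
Definition Cmul (z w : Cplx) :=
  mkC (cre z * cre w - cim z * cim w) (cre z * cim w + cim z * cre w).
Definition Copp (z : Cplx) := mkC (- cre z) (- cim z).
Definition Cabs (z : Cplx) := sqrt (cre z * cre z + cim z * cim z).

Inductive Fld := FR | FC.
Definition scal (F : Fld) : Type := match F with FR => R | FC => Cplx end.
Definition szero (F : Fld) : scal F :=
  match F return scal F with FR => 0 | FC => mkC 0 0 end.
Definition sone (F : Fld) : scal F :=
  match F return scal F with FR => 1 | FC => mkC 1 0 end.
Definition sadd (F : Fld) : scal F -> scal F -> scal F :=
  match F return scal F -> scal F -> scal F with FR => Rplus | FC => Cadd end.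
Definition smul (F : Fld) : scal F -> scal F -> scal F :=
  match F return scal F -> scal F -> scal F with FR => Rmult | FC => Cmul end.
Definition sabs (F : Fld) : scal F -> R :=
  match F return scal F -> R with FR => Rabs | FC => Cabs end.

Arguments sadd {F} _ _.
Arguments smul {F} _ _.
Arguments sabs {F} _.
Record NormedSpace (F : Fld) := {
  vT :> Type;
  vzero : vT;
  vadd : vT -> vT -> vT;
  vopp : vT -> vT;
  vscale : scal F -> vT -> vT;
  vnorm : vT -> R;
  vaddA : forall x y z, vadd x (vadd y z) = vadd (vadd x y) z;
  vaddC : forall x y, vadd x y = vadd y x;
  vadd0 : forall x, vadd x vzero = x;
  vaddN : forall x, vadd x (vopp x) = vzero;
  vscale1 : forall x, vscale (sone F) x = x;
  vscaleA : forall a b x, vscale a (vscale b x) = vscale (smul a b) x;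
  vscaleDr : forall a x y, vscale a (vadd x y) = vadd (vscale a x) (vscale a y);
  vscaleDl : forall a b x, vscale (sadd a b) x = vadd (vscale a x) (vscale b x);
  vnorm_ge0 : forall x, 0 <= vnorm x;
  vnorm_eq0 : forall x, vnorm x = 0 -> x = vzero;
  vnorm_scale : forall a x, vnorm (vscale a x) = sabs a * vnorm x;
  vnorm_triangle : forall x y, vnorm (vadd x y) <= vnorm x + vnorm y
}.
Arguments vT {F} _.
Arguments vzero {F} _.
Arguments vadd {F} _ _ _.
Arguments vopp {F} _ _.
Arguments vscale {F} _ _ _.
Arguments vnorm {F} _ _.

Definition vdist {F} (X : NormedSpace F) (x y : X) : R :=
  vnorm X (vadd X x (vopp X y)).

Definition banach {F} (X : NormedSpace F) : Prop :=
  forall u : nat -> X,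
    (forall eps, 0 < eps -> exists N, forall m n, (N <= m)%nat -> (N <= n)%nat ->
        vdist X (u m) (u n) < eps) ->
    exists l : X, forall eps, 0 < eps -> exists N, forall n, (N <= n)%nat ->
        vdist X (u n) l < eps.

Definition separable {F} (X : NormedSpace F) : Prop :=
  exists d : nat -> X, forall x eps, 0 < eps -> exists n, vdist X x (d n) < eps.

Inductive span {F} (X : NormedSpace F) (l : list X) : X -> Prop :=
| span0 : span X l (vzero X)
| spanS : forall v c y, In v l -> span X l y -> span X l (vadd X (vscale X c v) y).

Definition infinite_dim {F} (X : NormedSpace F) : Prop :=
  forall l : list X, exists x, ~ span X l x.

Definition fin_dim_subspace {F} (X : NormedSpace F) (P : X -> Prop) : Prop :=
  exists l : list X, forall x, P x <-> span X l x.

Definition fd_chain {F} (A : NormedSpace F) (V : nat -> A -> Prop) : Prop :=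
  (forall n, fin_dim_subspace A (V n)) /\
  (forall n x, V n x -> V (S n) x) /\
  (forall n, exists x, V (S n) x /\ ~ V n x).

Definition dense_union {F} (A : NormedSpace F) (V : nat -> A -> Prop) : Prop :=
  forall x eps, 0 < eps -> exists n y, V n y /\ vdist A x y < eps.

(* an element of A (x) B is represented by a finite list [(a_i,b_i)] = sum a_i (x) b_i *)
Definition tens {F} (A B : NormedSpace F) : Type := list (vT A * vT B).

Definition tsum {F} {A B : NormedSpace F} (f : A -> B -> scal F) (u : tens A B)
  : scal F := fold_right (fun p acc => sadd (f (fst p) (snd p)) acc) (szero F) u.

Definition bilinear {F} {A B : NormedSpace F} (f : A -> B -> scal F) : Prop :=
  (forall a1 a2 b, f (vadd A a1 a2) b = sadd (f a1 b) (f a2 b)) /\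
  (forall c a b, f (vscale A c a) b = smul c (f a b)) /\
  (forall a b1 b2, f a (vadd B b1 b2) = sadd (f a b1) (f a b2)) /\
  (forall c a b, f a (vscale B c b) = smul c (f a b)).

(* equality in the algebraic tensor product (universal property) *)
Definition tens_eq {F} {A B : NormedSpace F} (u v : tens A B) : Prop :=
  forall f : A -> B -> scal F, bilinear f -> tsum f u = tsum f v.

Definition tscale {F} {A B : NormedSpace F} (c : scal F) (u : tens A B) : tens A B :=
  map (fun p => (vscale A c (fst p), snd p)) u.

Definition linear_functional {F} (X : NormedSpace F) (f : X -> scal F) : Prop :=
  (forall x y, f (vadd X x y) = sadd (f x) (f y)) /\
  (forall c x, f (vscale X c x) = smul c (f x)).

Definition bounded_by {F} (X : NormedSpace F) (f : X -> scal F) (c : R) : Prop :=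
  forall x, sabs (f x) <= c * vnorm X x.

Definition tensor_norm {F} (A B : NormedSpace F) (alpha : tens A B -> R) : Prop :=
  (forall u v, tens_eq u v -> alpha u = alpha v) /\
  (forall u, 0 <= alpha u) /\
  (forall u, alpha u = 0 -> tens_eq u nil) /\
  (forall c u, alpha (tscale c u) = sabs c * alpha u) /\
  (forall u v, alpha (u ++ v) <= alpha u + alpha v).

(* reasonable crossnorm (Ryan): alpha(a(x)b) <= |a||b| and |f(x)g| <= |f||g| *)
Definition reasonable_crossnorm {F} (A B : NormedSpace F) (alpha : tens A B -> R)
  : Prop :=
  tensor_norm A B alpha /\
  (forall a b, alpha ((a, b) :: nil) <= vnorm A a * vnorm B b) /\
  (forall (f : A -> scal F) (g : B -> scal F) cf cg,
     linear_functional A f -> linear_functional B g ->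
     bounded_by A f cf -> bounded_by B g cg ->
     forall u, sabs (tsum (fun a b => smul (f a) (g b)) u) <= cf * cg * alpha u).

Definition completion {F} (A B : NormedSpace F) (alpha : tens A B -> R)
  (X : NormedSpace F) (iota : tens A B -> X) : Prop :=
  banach X /\
  (forall u v, iota (u ++ v) = vadd X (iota u) (iota v)) /\
  (forall c u, iota (tscale c u) = vscale X c (iota u)) /\
  (forall u, vnorm X (iota u) = alpha u) /\
  (forall x eps, 0 < eps -> exists u, vdist X x (iota u) < eps).

Definition is_glb (S : R -> Prop) (e : R) : Prop :=
  (forall s, S s -> e <= s) /\ (forall m, (forall s, S s -> m <= s) -> m <= e).

Definition Rinf (S : R -> Prop) : R := epsilon (inhabits 0) (is_glb S).

Definition En {F} (A B : NormedSpace F) (V : nat -> A -> Prop)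
  (X : NormedSpace F) (iota : tens A B -> X) (n : nat) (x : X) : R :=
  Rinf (fun r => exists u : tens A B,
          (forall p, In p u -> V n (fst p)) /\ r = vdist X x (iota u)).

(* a^p for a >= 0, p > 0, with the convention 0^p = 0 *)
Definition rpow (a p : R) : R := if Rle_dec a 0 then 0 else Rpower a p.

(* liminf_{n -> oo} u n < c *)
Definition liminf_lt (u : nat -> R) (c : R) : Prop :=
  exists r, r < c /\ forall N, exists n, (N <= n)%nat /\ u n < r.

Definition scale_fn (phi : nat -> R) : Prop :=
  (forall n, 0 < phi n) /\
  (forall m n, (m <= n)%nat -> phi n <= phi m) /\
  (forall eps, 0 < eps -> exists N, forall n, (N <= n)%nat -> phi n < eps).

Definition Bset {F} (A B : NormedSpace F) (V : nat -> A -> Prop)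
  (X : NormedSpace F) (iota : tens A B -> X) (phi : nat -> R) (x : X) : Prop :=
  liminf_lt (fun n => rpow (En A B V X iota n x) (phi n)) 1.

(* Main.v *)
Require Import Defs.
From Stdlib Require Import Reals Lra Lia List ClassicalEpsilon Classical.
From mathcomp Require classical_sets.
Open Scope R_scope.


Definition emb (F : Fld) (r : R) : scal F :=
  match F return scal F with FR => r | FC => mkC r 0 end.
Definition sre (F : Fld) : scal F -> R :=
  match F return scal F -> R with FR => fun z => z | FC => cre end.
Definition sneg (F : Fld) (z : scal F) : scal F := smul (emb F (-1)) z.
Definition ssub (F : Fld) (a b : scal F) : scal F := sadd a (sneg F b).
Definition sinv (F : Fld) : scal F -> scal F :=
  match F return scal F -> scal F with
  | FR => fun z => / z
  | FC => fun z => mkC (cre z / (cre z * cre z + cim z * cim z))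
                       (- cim z / (cre z * cre z + cim z * cim z)) end.

Lemma Cplx_eq (a b : Cplx) : cre a = cre b -> cim a = cim b -> a = b.
Proof. destruct a, b; simpl; intros; subst; reflexivity. Qed.

Lemma sabs_emb F r : sabs (emb F r) = Rabs r.
Proof.
  destruct F; simpl; [reflexivity|]. unfold Cabs; simpl.
  replace (r * r + 0 * 0) with (Rsqr r) by (unfold Rsqr; ring).
  apply sqrt_Rsqr_abs.
Qed.

Lemma sabs_ge0 F (z : scal F) : 0 <= sabs z.
Proof. destruct F; simpl; [apply Rabs_pos| apply sqrt_pos]. Qed.

Lemma emb_add F r s : emb F (r + s) = sadd (emb F r) (emb F s).
Proof. destruct F; simpl; [reflexivity|]. unfold Cadd; simpl. f_equal; ring. Qed.

Lemma emb_mul F r s : emb F (r * s) = smul (emb F r) (emb F s).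
Proof. destruct F; simpl; [reflexivity|]. unfold Cmul; simpl. f_equal; ring. Qed.

Lemma emb_one F : emb F 1 = sone F.
Proof. destruct F; reflexivity. Qed.
Lemma emb_zero F : emb F 0 = szero F.
Proof. destruct F; reflexivity. Qed.

Lemma sre_add F (a b : scal F) : sre F (sadd a b) = sre F a + sre F b.
Proof. destruct F; reflexivity. Qed.
Lemma sre_emb F r : sre F (emb F r) = r.
Proof. destruct F; reflexivity. Qed.
Lemma sre_mul_emb F r (z : scal F) : sre F (smul (emb F r) z) = r * sre F z.
Proof. destruct F; simpl; [reflexivity|]. ring. Qed.
Lemma sre_le_abs F (z : scal F) : Rabs (sre F z) <= sabs z.
Proof.
  destruct F; simpl; [lra|]. unfold Cabs.
  rewrite <- sqrt_Rsqr_abs. apply sqrt_le_1_alt. unfold Rsqr.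
  pose proof (Rle_0_sqr (cim z)); unfold Rsqr in *; lra.
Qed.
Lemma sre_zero F : sre F (szero F) = 0.
Proof. destruct F; reflexivity. Qed.
Lemma sre_one F : sre F (sone F) = 1.
Proof. destruct F; reflexivity. Qed.

Lemma smul_one_r F (z : scal F) : smul z (sone F) = z.
Proof. destruct F; simpl; [ring|]. destruct z; unfold Cmul; simpl; f_equal; ring. Qed.
Lemma smul_zero_l F (z : scal F) : smul (szero F) z = szero F.
Proof. destruct F; simpl; [ring|]. unfold Cmul; simpl; f_equal; ring. Qed.
Lemma smul_zero_r F (z : scal F) : smul z (szero F) = szero F.
Proof. destruct F; simpl; [ring|]. unfold Cmul; simpl; f_equal; ring. Qed.
Lemma sadd_zero_l F (z : scal F) : sadd (szero F) z = z.
Proof. destruct F; simpl; [ring|]. destruct z; unfold Cadd; simpl; f_equal; ring. Qed.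
Lemma sadd_zero_r F (z : scal F) : sadd z (szero F) = z.
Proof. destruct F; simpl; [ring|]. destruct z; unfold Cadd; simpl; f_equal; ring. Qed.

Lemma sadd_self_zero F (z : scal F) : sadd z z = z -> z = szero F.
Proof.
  destruct F; simpl; intro H; [lra|]. destruct z; unfold Cadd in H; simpl in H.
  injection H; intros; f_equal; lra.
Qed.

Lemma sabs_zero F : sabs (szero F) = 0.
Proof. rewrite <- emb_zero, sabs_emb. apply Rabs_R0. Qed.

Lemma sabs_eq0 F (z : scal F) : sabs z = 0 -> z = szero F.
Proof.
  destruct F; simpl; intro H.
  - destruct (Req_dec z 0); auto. exfalso; apply Rabs_no_R0 in H0; auto.
  - unfold Cabs in H. destruct z as [a b]; simpl in *.
    assert (a * a + b * b = 0).
    { apply sqrt_eq_0; auto. nra. }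
    f_equal; nra.
Qed.

Lemma smul_inv F (z : scal F) : z <> szero F -> smul z (sinv F z) = sone F.
Proof.
  destruct F; simpl; intro H.
  - field; auto.
  - destruct z as [a b]; simpl in *. unfold Cmul; simpl.
    assert (a * a + b * b <> 0).
    { intro E. apply H. f_equal; nra. }
    f_equal; field; auto.
Qed.

Lemma sabs_mul F (a b : scal F) : sabs (smul a b) = sabs a * sabs b.
Proof.
  destruct F; simpl; [apply Rabs_mult|]. unfold Cabs, Cmul; simpl.
  rewrite <- sqrt_mult_alt by nra. f_equal. ring.
Qed.

Lemma sabs_sneg F (z : scal F) : sabs (sneg F z) = sabs z.
Proof. unfold sneg. rewrite sabs_mul, sabs_emb. replace (Rabs (-1)) with 1 by (rewrite Rabs_left; lra). ring. Qed.

Lemma sabs_triangle F (a b : scal F) : sabs (sadd a b) <= sabs a + sabs b.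
Proof.
  destruct F; simpl; [apply Rabs_triang|]. destruct a as [a1 a2], b as [b1 b2].
  unfold Cabs, Cadd; simpl.
  pose proof (sqrt_pos (a1*a1+a2*a2)); pose proof (sqrt_pos (b1*b1+b2*b2)).
  apply Rsqr_incr_0_var; [|nra]. unfold Rsqr.
  rewrite sqrt_sqrt by (pose proof (Rle_0_sqr (a1+b1)); pose proof (Rle_0_sqr (a2+b2)); unfold Rsqr in *; lra).
  replace ((sqrt (a1 * a1 + a2 * a2) + sqrt (b1 * b1 + b2 * b2)) *
     (sqrt (a1 * a1 + a2 * a2) + sqrt (b1 * b1 + b2 * b2))) with
     (sqrt (a1 * a1 + a2 * a2) * sqrt (a1 * a1 + a2 * a2) + sqrt (b1 * b1 + b2 * b2) * sqrt (b1 * b1 + b2 * b2)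
      + 2 * (sqrt (a1 * a1 + a2 * a2) * sqrt (b1 * b1 + b2 * b2))) by ring.
  rewrite !sqrt_sqrt by nra. rewrite <- sqrt_mult_alt by nra.
  assert (a1*b1 + a2*b2 <= sqrt ((a1 * a1 + a2 * a2) * (b1 * b1 + b2 * b2))).
  { destruct (Rle_dec (a1*b1+a2*b2) 0). { pose proof (sqrt_pos ((a1 * a1 + a2 * a2) * (b1 * b1 + b2 * b2))). lra. }
    apply Rsqr_incr_0_var; [|apply sqrt_pos]. unfold Rsqr. rewrite sqrt_sqrt by nra.
    pose proof (Rle_0_sqr (a1*b2 - a2*b1)); unfold Rsqr in *; nra. }
  lra.
Qed.

Lemma sadd_comm F (a b : scal F) : sadd a b = sadd b a.
Proof. destruct F; simpl; [ring|]. unfold Cadd; f_equal; ring. Qed.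
Lemma sadd_assoc F (a b c : scal F) : sadd a (sadd b c) = sadd (sadd a b) c.
Proof. destruct F; simpl; [ring|]. unfold Cadd; simpl; f_equal; ring. Qed.
Lemma smul_comm F (a b : scal F) : smul a b = smul b a.
Proof. destruct F; simpl; [ring|]. unfold Cmul; f_equal; ring. Qed.
Lemma smul_assoc F (a b c : scal F) : smul a (smul b c) = smul (smul a b) c.
Proof. destruct F; simpl; [ring|]. unfold Cmul; simpl; f_equal; ring. Qed.
Lemma smul_add_r F (a b c : scal F) : smul a (sadd b c) = sadd (smul a b) (smul a c).
Proof. destruct F; simpl; [ring|]. unfold Cmul, Cadd; simpl; f_equal; ring. Qed.
Lemma sadd_neg F (a : scal F) : sadd a (sneg F a) = szero F.
Proof. destruct F; simpl; [ring|]. unfold Cmul, Cadd; simpl; f_equal; ring. Qed.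
Lemma sneg_add F (a b : scal F) : sneg F (sadd a b) = sadd (sneg F a) (sneg F b).
Proof. unfold sneg. apply smul_add_r. Qed.
Lemma sneg_emb F r : sneg F (emb F r) = emb F (- r).
Proof. unfold sneg. rewrite <- emb_mul. f_equal; ring. Qed.
Lemma smul_sneg_l F (a b : scal F) : smul (sneg F a) b = sneg F (smul a b).
Proof. unfold sneg. rewrite smul_assoc. reflexivity. Qed.

Definition scauchy F (c : nat -> scal F) : Prop :=
  forall eps, 0 < eps -> exists N, forall m n, (N <= m)%nat -> (N <= n)%nat ->
    sabs (ssub F (c m) (c n)) < eps.
Definition sconv F (c : nat -> scal F) (l : scal F) : Prop :=
  forall eps, 0 < eps -> exists N, forall n, (N <= n)%nat -> sabs (ssub F (c n) l) < eps.

Lemma R_cauchy_conv (u : nat -> R) :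
  (forall eps, 0 < eps -> exists N, forall m n, (N <= m)%nat -> (N <= n)%nat -> Rabs (u m - u n) < eps) ->
  exists l, forall eps, 0 < eps -> exists N, forall n, (N <= n)%nat -> Rabs (u n - l) < eps.
Proof.
  intro H. destruct (R_complete u) as [l Hl].
  { intros eps He. destruct (H eps He) as [N HN]. exists N. intros n m Hn Hm.
    unfold R_dist. apply HN; lia. }
  exists l. intros eps He. destruct (Hl eps He) as [N HN]. exists N. intros n Hn.
  apply HN. lia.
Qed.

Lemma scal_complete F (c : nat -> scal F) : scauchy F c -> exists l, sconv F c l.
Proof.
  unfold scauchy, sconv, ssub, sneg. destruct F; simpl.
  - intro H. destruct (R_cauchy_conv c) as [l Hl].
    { intros eps He. destruct (H eps He) as [N HN].
      exists N. intros m n Hm Hn. specialize (HN m n Hm Hn). replace (c m - c n) with (c m + -1 * c n) by ring. auto. }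
    exists l. intros eps He. destruct (Hl eps He) as [N HN]. exists N. intros n Hn.
    replace (c n + -1 * l) with (c n - l) by ring. auto.
  - intro H.
    assert (Hre : exists l, forall eps, 0 < eps -> exists N, forall n, (N <= n)%nat -> Rabs (cre (c n) - l) < eps).
    { apply R_cauchy_conv. intros eps He. destruct (H eps He) as [N HN]. exists N. intros m n Hm Hn.
      specialize (HN m n Hm Hn). eapply Rle_lt_trans; [|exact HN].
      pose proof (sre_le_abs FC (Cadd (c m) (Cmul (mkC (-1) 0) (c n)))) as K. simpl in K.
      replace (cre (c m) - cre (c n)) with (cre (c m) + (-1 * cre (c n) - 0 * cim (c n))) by ring. exact K. }
    assert (Him : exists l, forall eps, 0 < eps -> exists N, forall n, (N <= n)%nat -> Rabs (cim (c n) - l) < eps).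
    { apply R_cauchy_conv. intros eps He. destruct (H eps He) as [N HN]. exists N. intros m n Hm Hn.
      specialize (HN m n Hm Hn). eapply Rle_lt_trans; [|exact HN].
      set (z := Cadd (c m) (Cmul (mkC (-1) 0) (c n))).
      unfold Cabs. rewrite <- sqrt_Rsqr_abs. apply sqrt_le_1_alt. unfold Rsqr, z; simpl.
      pose proof (Rle_0_sqr (cre (c m) + (-1 * cre (c n) - 0 * cim (c n)))). unfold Rsqr in *. lra. }
    destruct Hre as [a Ha], Him as [b Hb]. exists (mkC a b). intros eps He.
    destruct (Ha (eps/2)) as [N1 H1]; [lra|]. destruct (Hb (eps/2)) as [N2 H2]; [lra|].
    exists (N1 + N2)%nat. intros n Hn.
    specialize (H1 n ltac:(lia)). specialize (H2 n ltac:(lia)).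
    unfold Cabs, Cadd, Cmul; simpl.
    apply Rle_lt_trans with (Rabs (cre (c n) - a) + Rabs (cim (c n) - b)); [|lra].
    pose proof (Rabs_pos (cre (c n) - a)); pose proof (Rabs_pos (cim (c n) - b)).
    replace (cre (c n) + (-1 * a - 0 * b)) with (cre (c n) - a) by ring.
    replace (cim (c n) + (-1 * b + 0 * a)) with (cim (c n) - b) by ring.
    set (p := cre (c n) - a) in *. set (q := cim (c n) - b) in *.
    apply Rsqr_incr_0_var; [|lra]. unfold Rsqr.
    rewrite sqrt_sqrt by (pose proof (Rle_0_sqr p); pose proof (Rle_0_sqr q); unfold Rsqr in *; lra).
    pose proof (Rsqr_abs p); pose proof (Rsqr_abs q); unfold Rsqr in *. nra.
Qed.


Definition vsub {F} (X : NormedSpace F) (x y : X) : X := vadd X x (vopp X y).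
Definition rscale {F} (X : NormedSpace F) (r : R) (x : X) : X := vscale X (emb F r) x.

Lemma vadd0l {F} (X : NormedSpace F) (x : X) : vadd X (vzero X) x = x.
Proof. rewrite vaddC. apply vadd0. Qed.
Lemma vaddNl {F} (X : NormedSpace F) (x : X) : vadd X (vopp X x) x = vzero X.
Proof. rewrite vaddC. apply vaddN. Qed.
Lemma vadd_cancel_l {F} (X : NormedSpace F) (z x y : X) : vadd X z x = vadd X z y -> x = y.
Proof.
  intro H. rewrite <- (vadd0l X x), <- (vadd0l X y), <- (vaddNl X z), <- !vaddA, H. reflexivity.
Qed.
Lemma vopp_unique {F} (X : NormedSpace F) (x y : X) : vadd X x y = vzero X -> y = vopp X x.
Proof. intro H. apply (vadd_cancel_l X x). rewrite H, vaddN. reflexivity. Qed.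
Lemma vself_zero {F} (X : NormedSpace F) (x : X) : vadd X x x = x -> x = vzero X.
Proof. intro H. apply (vadd_cancel_l X x). rewrite H, vadd0. reflexivity. Qed.

Lemma vscale_zero_s {F} (X : NormedSpace F) (x : X) : vscale X (szero F) x = vzero X.
Proof. apply vself_zero. rewrite <- vscaleDl, sadd_zero_l. reflexivity. Qed.
Lemma vscale_zero_v {F} (X : NormedSpace F) c : vscale X c (vzero X) = vzero X.
Proof. apply vself_zero. rewrite <- vscaleDr, vadd0. reflexivity. Qed.
Lemma vscale_sneg {F} (X : NormedSpace F) c (x : X) : vscale X (sneg F c) x = vopp X (vscale X c x).
Proof.
  apply vopp_unique. rewrite <- vscaleDl, sadd_neg. apply vscale_zero_s.
Qed.
Lemma vscale_m1 {F} (X : NormedSpace F) (x : X) : vscale X (emb F (-1)) x = vopp X x.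
Proof.
  replace (emb F (-1)) with (sneg F (sone F)).
  - rewrite vscale_sneg, vscale1. reflexivity.
  - rewrite <- emb_one, sneg_emb. reflexivity.
Qed.
Lemma vopp_opp {F} (X : NormedSpace F) (x : X) : vopp X (vopp X x) = x.
Proof. symmetry. apply vopp_unique. apply vaddNl. Qed.
Lemma vopp_zero {F} (X : NormedSpace F) : vopp X (vzero X) = vzero X.
Proof. symmetry. apply vopp_unique. apply vadd0. Qed.
Lemma vadd_comm4 {F} (X : NormedSpace F) (a b c d : X) :
  vadd X (vadd X a b) (vadd X c d) = vadd X (vadd X a c) (vadd X b d).
Proof.
  rewrite <- !vaddA. f_equal. rewrite !vaddA. f_equal. apply vaddC.
Qed.
Lemma vopp_add {F} (X : NormedSpace F) (x y : X) : vopp X (vadd X x y) = vadd X (vopp X x) (vopp X y).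
Proof. symmetry. apply vopp_unique. rewrite vadd_comm4, !vaddN, vadd0. reflexivity. Qed.
Lemma vscale_opp {F} (X : NormedSpace F) c (x : X) : vscale X c (vopp X x) = vopp X (vscale X c x).
Proof. apply vopp_unique. rewrite <- vscaleDr, vaddN. apply vscale_zero_v. Qed.

Lemma vnorm0 {F} (X : NormedSpace F) : vnorm X (vzero X) = 0.
Proof. rewrite <- (vscale_zero_s X (vzero X)), vnorm_scale, sabs_zero. ring. Qed.
Lemma vnorm_opp {F} (X : NormedSpace F) (x : X) : vnorm X (vopp X x) = vnorm X x.
Proof. rewrite <- vscale_m1, vnorm_scale, sabs_emb. replace (Rabs (-1)) with 1 by (rewrite Rabs_left; lra). ring. Qed.
Lemma vnorm_rscale {F} (X : NormedSpace F) r (x : X) : vnorm X (rscale X r x) = Rabs r * vnorm X x.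
Proof. unfold rscale. rewrite vnorm_scale, sabs_emb. reflexivity. Qed.

Lemma vsub_self {F} (X : NormedSpace F) (x : X) : vsub X x x = vzero X.
Proof. apply vaddN. Qed.
Lemma vsub_zero {F} (X : NormedSpace F) (x : X) : vsub X x (vzero X) = x.
Proof. unfold vsub. rewrite vopp_zero. apply vadd0. Qed.
Lemma vsub_opp {F} (X : NormedSpace F) (x y : X) : vopp X (vsub X x y) = vsub X y x.
Proof. unfold vsub. rewrite vopp_add, vopp_opp, vaddC. reflexivity. Qed.
Lemma vsub_chain {F} (X : NormedSpace F) (x y z : X) :
  vsub X x z = vadd X (vsub X x y) (vsub X y z).
Proof.
  unfold vsub. rewrite <- vaddA. f_equal. rewrite vaddA, vaddNl, vadd0l. reflexivity.
Qed.
Lemma vdist_sym {F} (X : NormedSpace F) (x y : X) : vdist X x y = vdist X y x.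
Proof. unfold vdist. fold (vsub X x y). fold (vsub X y x). rewrite <- vsub_opp, vnorm_opp. reflexivity. Qed.
Lemma vdist_tri {F} (X : NormedSpace F) (x y z : X) : vdist X x z <= vdist X x y + vdist X y z.
Proof.
  unfold vdist. fold (vsub X x z). fold (vsub X x y). fold (vsub X y z).
  rewrite (vsub_chain X x y z). apply vnorm_triangle.
Qed.
Lemma vdist_ge0 {F} (X : NormedSpace F) (x y : X) : 0 <= vdist X x y.
Proof. apply vnorm_ge0. Qed.
Lemma vdist_self {F} (X : NormedSpace F) (x : X) : vdist X x x = 0.
Proof. unfold vdist. rewrite vaddN. apply vnorm0. Qed.
Lemma vdist_eq0 {F} (X : NormedSpace F) (x y : X) : vdist X x y = 0 -> x = y.
Proof.
  unfold vdist. intro H. apply vnorm_eq0 in H. apply vopp_unique in H.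
  rewrite <- (vopp_opp X y), H, vopp_opp. reflexivity.
Qed.
Lemma vnorm_dist0 {F} (X : NormedSpace F) (x : X) : vdist X x (vzero X) = vnorm X x.
Proof. unfold vdist. rewrite vopp_zero, vadd0. reflexivity. Qed.
Lemma vnorm_sub_le {F} (X : NormedSpace F) (x y : X) : vnorm X x <= vnorm X y + vdist X x y.
Proof.
  rewrite <- !vnorm_dist0. rewrite Rplus_comm. apply vdist_tri.
Qed.
Lemma vdist_add_r {F} (X : NormedSpace F) (x y z : X) : vdist X (vadd X x z) (vadd X y z) = vdist X x y.
Proof.
  unfold vdist. f_equal. rewrite vopp_add, vadd_comm4, vaddN, vadd0. reflexivity.
Qed.
Lemma vdist_add2 {F} (X : NormedSpace F) (a b c d : X) :
  vdist X (vadd X a b) (vadd X c d) <= vdist X a c + vdist X b d.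
Proof.
  unfold vdist. rewrite vopp_add, vadd_comm4. apply vnorm_triangle.
Qed.
Lemma vdist_scale {F} (X : NormedSpace F) c (x y : X) :
  vdist X (vscale X c x) (vscale X c y) = sabs c * vdist X x y.
Proof. unfold vdist. rewrite <- vscale_opp, <- vscaleDr, vnorm_scale. reflexivity. Qed.
Lemma vdist_scale_l {F} (X : NormedSpace F) c d (x : X) :
  vdist X (vscale X c x) (vscale X d x) = sabs (ssub F c d) * vnorm X x.
Proof. unfold vdist, ssub. rewrite <- vscale_sneg, <- vscaleDl, vnorm_scale. reflexivity. Qed.

Lemma rscale_add_l {F} (X : NormedSpace F) r s (x : X) : rscale X (r + s) x = vadd X (rscale X r x) (rscale X s x).
Proof. unfold rscale. rewrite emb_add. apply vscaleDl. Qed.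
Lemma rscale_add_r {F} (X : NormedSpace F) r (x y : X) : rscale X r (vadd X x y) = vadd X (rscale X r x) (rscale X r y).
Proof. apply vscaleDr. Qed.
Lemma rscale_mul {F} (X : NormedSpace F) r s (x : X) : rscale X r (rscale X s x) = rscale X (r * s) x.
Proof. unfold rscale. rewrite vscaleA, emb_mul. reflexivity. Qed.
Lemma rscale_one {F} (X : NormedSpace F) (x : X) : rscale X 1 x = x.
Proof. unfold rscale. rewrite emb_one. apply vscale1. Qed.
Lemma rscale_zero {F} (X : NormedSpace F) (x : X) : rscale X 0 x = vzero X.
Proof. unfold rscale. rewrite emb_zero. apply vscale_zero_s. Qed.
Lemma rscale_m1 {F} (X : NormedSpace F) (x : X) : rscale X (-1) x = vopp X x.
Proof. apply vscale_m1. Qed.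


Definition subspace {F} (X : NormedSpace F) (W : X -> Prop) : Prop :=
  W (vzero X) /\ (forall x y, W x -> W y -> W (vadd X x y)) /\
  (forall c x, W x -> W (vscale X c x)).

Definition closedP {F} (X : NormedSpace F) (W : X -> Prop) : Prop :=
  forall x, (forall eps, 0 < eps -> exists w, W w /\ vdist X x w < eps) -> W x.

Lemma span_add {F} (X : NormedSpace F) l (x y : X) : span X l x -> span X l y -> span X l (vadd X x y).
Proof.
  intros Hx Hy. induction Hx.
  - rewrite vadd0l. auto.
  - rewrite <- vaddA. apply spanS; auto.
Qed.
Lemma span_scale {F} (X : NormedSpace F) l c (x : X) : span X l x -> span X l (vscale X c x).
Proof.
  intros Hx. induction Hx.
  - rewrite vscale_zero_v. constructor.
  - rewrite vscaleDr, vscaleA. apply spanS; auto.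
Qed.
Lemma span_subspace {F} (X : NormedSpace F) l : subspace X (span X l).
Proof. split; [constructor|split]; intros; [apply span_add|apply span_scale]; auto. Qed.
Lemma span_in {F} (X : NormedSpace F) l (v : X) : In v l -> span X l v.
Proof.
  intro H. rewrite <- (vadd0 _ X v). rewrite <- (vscale1 _ X v) at 1. apply spanS; auto. constructor.
Qed.
Lemma span_mono {F} (X : NormedSpace F) l l' (x : X) : incl l l' -> span X l x -> span X l' x.
Proof. intros Hi Hx. induction Hx; constructor; auto. Qed.

Lemma subspace_opp {F} (X : NormedSpace F) W (x : X) : subspace X W -> W x -> W (vopp X x).
Proof. intros [H0 [Ha Hs]] Hx. rewrite <- vscale_m1. auto. Qed.
Lemma subspace_sub {F} (X : NormedSpace F) W (x y : X) : subspace X W -> W x -> W y -> W (vsub X x y).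
Proof. intros HW Hx Hy. pose proof HW as [H0 [Ha Hs]]. apply Ha; auto. apply subspace_opp; auto. Qed.

Lemma span_cons_decomp {F} (X : NormedSpace F) v l (z : X) :
  span X (v :: l) z -> exists c w, span X l w /\ z = vadd X w (vscale X c v).
Proof.
  intro H. induction H as [|v' c y Hin Hy IH].
  - exists (szero F), (vzero X). split; [constructor|]. rewrite vscale_zero_s, vadd0. reflexivity.
  - destruct IH as [d [w [Hw E]]]. subst y. destruct Hin as [E|Hin].
    + subst v'. exists (sadd c d), w. split; auto.
      rewrite vscaleDl, vaddA, (vaddC _ X (vscale X c v) w), <- vaddA. reflexivity.
    + exists d, (vadd X (vscale X c v') w). split; [apply spanS; auto|].
      rewrite vaddA. reflexivity.
Qed.
Lemma span_cons_intro {F} (X : NormedSpace F) v l c (w : X) :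
  span X l w -> span X (v :: l) (vadd X w (vscale X c v)).
Proof.
  intro Hw. rewrite vaddC. apply spanS; [left; auto|]. eapply span_mono; [|exact Hw].
  intros a Ha; right; auto.
Qed.

Lemma sep_closed {F} (X : NormedSpace F) W (x : X) :
  closedP X W -> ~ W x -> exists d, 0 < d /\ forall w, W w -> d <= vdist X x w.
Proof.
  intros Hc Hn. apply NNPP. intro Hno. apply Hn, Hc. intros eps He.
  apply NNPP. intro H2. apply Hno. exists eps. split; auto. intros w Hw.
  apply Rnot_lt_le. intro Hlt. apply H2. exists w; auto.
Qed.

Lemma norm_lower {F} (X : NormedSpace F) W (v : X) d :
  subspace X W -> (forall w, W w -> d <= vdist X v w) ->
  forall w c, W w -> sabs c * d <= vnorm X (vadd X w (vscale X c v)).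
Proof.
  intros HW Hd w c Hw.
  destruct (classic (c = szero F)) as [E|Hc].
  - subst. rewrite sabs_zero. rewrite Rmult_0_l. apply vnorm_ge0.
  - assert (E : vadd X w (vscale X c v) = vscale X c (vadd X v (vscale X (sinv F c) w))).
    { rewrite vscaleDr, vscaleA, smul_inv by auto. rewrite vscale1, vaddC. reflexivity. }
    rewrite E, vnorm_scale. apply Rmult_le_compat_l; [apply sabs_ge0|].
    pose proof HW as [H0 [Ha Hs]].
    specialize (Hd (vopp X (vscale X (sinv F c) w))).
    unfold vdist in Hd. rewrite vopp_opp in Hd. apply Hd. apply subspace_opp; auto.
Qed.

Lemma vsub_decomp {F} (X : NormedSpace F) (a b v : X) c d :
  vsub X (vadd X a (vscale X c v)) (vadd X b (vscale X d v)) =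
  vadd X (vsub X a b) (vscale X (ssub F c d) v).
Proof.
  unfold vsub, ssub. rewrite vopp_add, vadd_comm4. f_equal.
  rewrite vscaleDl, vscale_sneg. reflexivity.
Qed.

Lemma choice_fun {A B : Type} (P : A -> B -> Prop) : (forall a, exists b, P a b) -> exists f : A -> B, forall a, P a (f a).
Proof.
  intro H. exists (fun a => proj1_sig (constructive_indefinite_description _ (H a))).
  intro a. exact (proj2_sig (constructive_indefinite_description _ (H a))).
Qed.

Lemma inv_small (eps : R) : 0 < eps -> exists N, forall n, (N <= n)%nat -> / (INR n + 1) < eps.
Proof.
  intro He. destruct (archimed_cor1 eps He) as [N [HN HN0]].
  exists N. intros n Hn. apply le_INR in Hn. apply lt_INR in HN0. simpl in HN0.
  eapply Rle_lt_trans; [|exact HN]. apply Rinv_le_contravar; lra.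
Qed.

Lemma span_closed {F} (X : NormedSpace F) l : closedP X (span X l).
Proof.
  induction l as [|v l IH].
  - intros x Hx. assert (x = vzero X).
    { apply vdist_eq0. apply Rle_antisym; [|apply vdist_ge0].
      apply Rnot_lt_le. intro Hp. destruct (Hx _ Hp) as [w [Hw Hd]].
      assert (w = vzero X). { inversion Hw; auto. contradiction. }
      subst w. lra. }
    subst; constructor.
  - destruct (classic (span X l v)) as [Hv|Hv].
    +
      assert (Hsub : forall z, span X (v :: l) z -> span X l z).
      { intros z Hz. destruct (span_cons_decomp X v l z Hz) as [c [w [Hw E]]]. subst.
        apply span_add; auto. apply span_scale; auto. }
      intros x Hx. eapply span_mono; [|apply IH]. { intros a Ha; right; auto. }
      intros eps He. destruct (Hx eps He) as [w [Hw Hd]]. exists w; auto.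
    + destruct (sep_closed X (span X l) v IH Hv) as [d [Hd Hdist]].
      pose proof (norm_lower X (span X l) v d (span_subspace X l) Hdist) as NL.
      intros x Hx.
      assert (Hseq : forall n : nat, exists p : scal F * X, span X l (snd p) /\
                 vdist X x (vadd X (snd p) (vscale X (fst p) v)) < / (INR n + 1)).
      { intro n. destruct (Hx (/ (INR n + 1))) as [z [Hz Hxz]].
        { apply Rinv_0_lt_compat. pose proof (pos_INR n). lra. }
        destruct (span_cons_decomp X v l z Hz) as [c [w [Hw E]]]. exists (c, w). subst. auto. }
      destruct (choice_fun _ Hseq) as [f Hf].
      set (c := fun n => fst (f n)). set (w := fun n => snd (f n)).
      assert (Hcauchy : scauchy F c).
      { intros eps He. destruct (inv_small (eps * d / 2)) as [N HN].
        { apply Rmult_lt_0_compat; [apply Rmult_lt_0_compat|]; lra. }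
        exists N. intros m n Hm Hn.
        destruct (Hf m) as [Hwm Hdm]. destruct (Hf n) as [Hwn Hdn].
        pose proof (NL (vsub X (w m) (w n)) (ssub F (c m) (c n)) (subspace_sub X _ _ _ (span_subspace X l) Hwm Hwn)) as K.
        rewrite <- vsub_decomp in K. change (vnorm X (vsub X ?a ?b)) with (vdist X a b) in K.
        pose proof (vdist_tri X (vadd X (w m) (vscale X (c m) v)) x (vadd X (w n) (vscale X (c n) v))) as T.
        rewrite (vdist_sym X _ x) in T. change (fst (f m)) with (c m) in Hdm. change (snd (f m)) with (w m) in Hdm.
        change (fst (f n)) with (c n) in Hdn. change (snd (f n)) with (w n) in Hdn.
        assert (/ (INR m + 1) < eps * d / 2) by (apply HN; auto).
        assert (/ (INR n + 1) < eps * d / 2) by (apply HN; auto).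
        assert (sabs (ssub F (c m) (c n)) * d < eps * d).
        { eapply Rle_lt_trans; [exact K|]. eapply Rle_lt_trans; [exact T|]. lra. }
        apply Rmult_lt_reg_r with d; auto. }
      destruct (scal_complete F c Hcauchy) as [c0 Hc0].
      assert (Hw0 : span X l (vsub X x (vscale X c0 v))).
      { apply IH. intros eps He.
        destruct (inv_small (eps / 2)) as [N1 HN1]; [lra|].
        destruct (Hc0 (eps / (2 * (vnorm X v + 1)))) as [N2 HN2].
        { apply Rdiv_lt_0_compat; auto. pose proof (vnorm_ge0 _ X v). lra. }
        set (n := (N1 + N2)%nat). exists (w n). destruct (Hf n) as [Hwn Hdn]. split; auto.
        specialize (HN1 n ltac:(unfold n; lia)). specialize (HN2 n ltac:(unfold n; lia)).
        assert (Ew : w n = vsub X (vadd X (w n) (vscale X (c n) v)) (vscale X (c n) v)).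
        { unfold vsub. rewrite <- vaddA, vaddN, vadd0. reflexivity. }
        rewrite vdist_sym, Ew. unfold vsub. eapply Rle_lt_trans; [apply vdist_add2|].
        rewrite <- !vscale_m1, vdist_scale, sabs_emb, vdist_scale_l.
        replace (Rabs (-1)) with 1 by (rewrite Rabs_left; lra). change (fst (f n)) with (c n) in Hdn. change (snd (f n)) with (w n) in Hdn.
        rewrite vdist_sym in Hdn.
        assert (sabs (ssub F (c n) c0) * vnorm X v <= eps / 2).
        { pose proof (vnorm_ge0 _ X v). pose proof (sabs_ge0 F (ssub F (c n) c0)).
          apply Rle_trans with (eps / (2 * (vnorm X v + 1)) * (vnorm X v + 1)).
          - nra.
          - right. field. lra. }
        lra. }
      replace x with (vadd X (vsub X x (vscale X c0 v)) (vscale X c0 v)).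
      * apply span_cons_intro; auto.
      * unfold vsub. rewrite <- vaddA, vaddNl, vadd0. reflexivity.
Qed.


Lemma zorn_union (T : Type) (P : (T -> Prop) -> Prop) :
  (forall Fam : (T -> Prop) -> Prop, (forall G, Fam G -> P G) ->
     (forall G H, Fam G -> Fam H -> (forall t, G t -> H t) \/ (forall t, H t -> G t)) ->
     P (fun t => exists G, Fam G /\ G t)) ->
  exists A, P A /\ forall B, (forall t, A t -> B t) -> (exists t, B t /\ ~ A t) -> ~ P B.
Proof.
  intro H. destruct (@classical_sets.Zorn_bigcup T P) as [A [HA HB]].
  - intros Fam HF Htot.
    replace (classical_sets.bigcup Fam (fun X => X)) with (fun t => exists G, Fam G /\ G t).
    + apply H; [exact HF|]. intros G K HG HK. exact (Htot G K HG HK).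
    + apply boolp.functional_extensionality_dep. intro t. apply boolp.propositional_extensionality.
      unfold classical_sets.bigcup. simpl. split.
      * intros [G [HG Gt]]. exists G; auto.
      * intros [G HG Gt]. exists G; auto.
  - exists A. split; auto. intros B HAB [t [Bt nAt]]. apply HB. split.
    + exact HAB.
    + intro K. apply nAt. apply K. exact Bt.
Qed.


Definition G0 {F} (X : NormedSpace F) (W : X -> Prop) (a : X) (p : vT X * R) : Prop :=
  exists w c, W w /\ p = (vadd X w (vscale X c a), sre F c).

Definition Props {F} (X : NormedSpace F) (W : X -> Prop) (a : X) (K : R) (G : vT X * R -> Prop) : Prop :=
  (forall p, G0 X W a p -> G p) /\
  (forall x s y t, G (x, s) -> G (y, t) -> G (vadd X x y, s + t)) /\
  (forall r x s, G (x, s) -> G (rscale X r x, r * s)) /\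
  (forall x s, G (x, s) -> s <= K * vnorm X x).

Lemma G0_props {F} (X : NormedSpace F) W a K :
  subspace X W -> (forall w c, W w -> sabs c <= K * vnorm X (vadd X w (vscale X c a))) ->
  Props X W a K (G0 X W a).
Proof.
  intros HW Hb. pose proof HW as [H0 [Ha Hs]]. split; [auto|split; [|split]].
  - intros x s y t [w1 [c1 [Hw1 E1]]] [w2 [c2 [Hw2 E2]]]. injection E1; injection E2; intros; subst.
    exists (vadd X w1 w2), (sadd c1 c2). split; auto. f_equal.
    + rewrite vadd_comm4, vscaleDl. reflexivity.
    + rewrite sre_add. reflexivity.
  - intros r x s [w [c [Hw E]]]. injection E; intros; subst.
    exists (rscale X r w), (smul (emb F r) c). split; [unfold rscale; auto|]. f_equal.
    + unfold rscale. rewrite vscaleDr, vscaleA. reflexivity.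
    + rewrite sre_mul_emb. reflexivity.
  - intros x s [w [c [Hw E]]]. injection E; intros; subst.
    eapply Rle_trans; [|apply Hb; auto]. pose proof (sre_le_abs F c).
    pose proof (Rle_abs (sre F c)). lra.
Qed.

Lemma Props_unique {F} (X : NormedSpace F) W a K G x s t :
  Props X W a K G -> G (x, s) -> G (x, t) -> s = t.
Proof.
  intros [_ [Hadd [Hsc Hd]]] Hs Ht.
  assert (forall s t, G (x, s) -> G (x, t) -> s <= t).
  { intros s' t' Hs' Ht'. pose proof (Hsc (-1) x t' Ht'). pose proof (Hadd _ _ _ _ Hs' H).
    apply Hd in H0. rewrite rscale_m1, vaddN, vnorm0 in H0. lra. }
  apply Rle_antisym; auto.
Qed.

Lemma real_HB {F} (X : NormedSpace F) (W : X -> Prop) (a : X) (K : R) :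
  0 <= K -> subspace X W ->
  (forall w c, W w -> sabs c <= K * vnorm X (vadd X w (vscale X c a))) ->
  exists u : X -> R,
    (forall x y, u (vadd X x y) = u x + u y) /\
    (forall r x, u (rscale X r x) = r * u x) /\
    (forall x, Rabs (u x) <= K * vnorm X x) /\
    (forall w c, W w -> u (vadd X w (vscale X c a)) = sre F c).
Proof.
  intros HK HW Hb.
  pose proof (G0_props X W a K HW Hb) as HG0.
  pose proof HW as [HW0 [HWa HWs]].
  assert (G00 : G0 X W a (vzero X, 0)).
  { exists (vzero X), (szero F). split; auto. rewrite vscale_zero_s, vadd0, sre_zero. reflexivity. }
  set (P := fun G : vT X * R -> Prop => (forall p, ~ G p) \/ Props X W a K G).
  destruct (zorn_union (vT X * R) P) as [A [PA Amax]].
  { intros Fam HF Htot.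
    destruct (classic (exists G p, Fam G /\ G p)) as [[G1 [p1 [HG1 Gp1]]]|Hno].
    2: { left. intros p [G [HG Gp]]. apply Hno. exists G, p. auto. }
    right.
    assert (HP : forall G p, Fam G -> G p -> Props X W a K G).
    { intros G p HG Gp. destruct (HF G HG) as [E|E]; auto. exfalso; eapply E; eauto. }
    split; [|split; [|split]].
    - intros p Hp. exists G1. split; auto. apply (HP G1 p1 HG1 Gp1). auto.
    - intros x s y t [G [HG Gx]] [H [HH Hy]].
      destruct (Htot G H HG HH) as [S|S].
      + exists H. split; auto. apply (HP H _ HH Hy); auto.
      + exists G. split; auto. apply (HP G _ HG Gx); auto.
    - intros r x s [G [HG Gx]]. exists G. split; auto. apply (HP G _ HG Gx); auto.
    - intros x s [G [HG Gx]]. apply (HP G _ HG Gx); auto. }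
  assert (PrA : Props X W a K A).
  { destruct PA as [E|E]; auto. exfalso.
    apply (Amax (G0 X W a)).
    - intros t At. exfalso; eapply E; eauto.
    - exists (vzero X, 0). split; [auto| exact (E _)].
    - right. auto. }
  assert (A00 : A (vzero X, 0)) by (apply PrA; auto).
  assert (Tot : forall x, exists t, A (x, t)).
  { intro x0. apply NNPP. intro Hn.
    set (S := fun v => exists z s, A (z, s) /\ v = s - K * vnorm X (vsub X z x0)).
    assert (key : forall z1 s1 z2 s2, A (z1, s1) -> A (z2, s2) ->
               s1 - K * vnorm X (vsub X z1 x0) <= K * vnorm X (vadd X z2 x0) - s2).
    { intros z1 s1 z2 s2 H1 H2. destruct PrA as [_ [Hadd [_ Hd]]].
      pose proof (Hd _ _ (Hadd _ _ _ _ H1 H2)) as D.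
      assert (vadd X z1 z2 = vadd X (vsub X z1 x0) (vadd X z2 x0)).
      { unfold vsub. rewrite vadd_comm4, vaddNl, vadd0. reflexivity. }
      rewrite H in D. pose proof (vnorm_triangle _ X (vsub X z1 x0) (vadd X z2 x0)). nra. }
    destruct (completeness S) as [t0 [Hub Hlub]].
    { exists (K * vnorm X (vadd X (vzero X) x0) - 0). intros v [z [s [Hz E]]]. subst. apply key; auto. }
    { exists (0 - K * vnorm X (vsub X (vzero X) x0)). exists (vzero X), 0. auto. }
    assert (HL : forall z s, A (z, s) -> s - K * vnorm X (vsub X z x0) <= t0).
    { intros z s Hz. apply Hub. exists z, s; auto. }
    assert (HU : forall z s, A (z, s) -> t0 <= K * vnorm X (vadd X z x0) - s).
    { intros z s Hz. apply Hlub. intros v [z1 [s1 [Hz1 E]]]. subst. apply key; auto. }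
    set (A' := fun p : vT X * R => exists z s r, A (z, s) /\ p = (vadd X z (rscale X r x0), s + r * t0)).
    assert (AA' : forall p, A p -> A' p).
    { intros [z s] Hp. exists z, s, 0. split; auto. rewrite rscale_zero, vadd0. f_equal; ring. }
    apply (Amax A').
    - intros p Hp. auto.
    - exists (x0, t0). split.
      + exists (vzero X), 0, 1. split; auto. rewrite rscale_one, vadd0l. f_equal; ring.
      + intro H. apply Hn. exists t0. auto.
    - right. destruct PrA as [PG0 [Hadd [Hsc Hd]]]. split; [|split; [|split]].
      + intros p Hp. apply AA', PG0, Hp.
      + intros x s y t [z1 [s1 [r1 [H1 E1]]]] [z2 [s2 [r2 [H2 E2]]]].
        injection E1; injection E2; intros; subst.
        exists (vadd X z1 z2), (s1 + s2), (r1 + r2). split; auto. f_equal.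
        * rewrite vadd_comm4, rscale_add_l. reflexivity.
        * ring.
      + intros q x s [z [s1 [r [H1 E1]]]]. injection E1; intros; subst.
        exists (rscale X q z), (q * s1), (q * r). split; auto. f_equal.
        * rewrite rscale_add_r, rscale_mul. reflexivity.
        * ring.
      + intros x s [z [s1 [r [H1 E1]]]]. injection E1; intros; subst.
        destruct (Rtotal_order r 0) as [Hr|[Hr|Hr]].
        * set (q := - r). assert (Hq : 0 < q) by (unfold q; lra).
          pose proof (HL _ _ (Hsc (/ q) z s1 H1)) as L.
          assert (E : vnorm X (vsub X (rscale X (/ q) z) x0) * q = vnorm X (vadd X z (rscale X r x0))).
          { transitivity (vnorm X (rscale X q (vsub X (rscale X (/ q) z) x0))).
            { rewrite vnorm_rscale, (Rabs_right q) by lra. ring. } f_equal.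
            unfold vsub. rewrite rscale_add_r, rscale_mul, Rinv_r by lra. rewrite rscale_one.
            rewrite <- rscale_m1, rscale_mul. f_equal. f_equal. unfold q; ring. }
          assert (Lq : (/ q * s1 - K * vnorm X (vsub X (rscale X (/ q) z) x0)) * q <= t0 * q).
          { apply Rmult_le_compat_r; lra. }
          set (N := vnorm X (vsub X (rscale X (/ q) z) x0)) in *.
          assert (L2 : s1 - K * (N * q) <= t0 * q).
          { replace (s1 - K * (N * q)) with ((/ q * s1 - K * N) * q) by (field; lra). exact Lq. }
          rewrite E in L2. unfold q in L2. lra.
        * subst r. rewrite rscale_zero, vadd0. replace (s1 + 0 * t0) with s1 by ring. auto.
        * pose proof (HU _ _ (Hsc (/ r) z s1 H1)) as U.
          assert (E : vnorm X (vadd X (rscale X (/ r) z) x0) * r = vnorm X (vadd X z (rscale X r x0))).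
          { transitivity (vnorm X (rscale X r (vadd X (rscale X (/ r) z) x0))).
            { rewrite vnorm_rscale, (Rabs_right r) by lra. ring. } f_equal.
            rewrite rscale_add_r, rscale_mul, Rinv_r by lra. rewrite rscale_one. reflexivity. }
          assert (Ur : t0 * r <= (K * vnorm X (vadd X (rscale X (/ r) z) x0) - / r * s1) * r).
          { apply Rmult_le_compat_r; lra. }
          set (N := vnorm X (vadd X (rscale X (/ r) z) x0)) in *.
          assert (U2 : t0 * r <= K * (N * r) - s1).
          { replace (K * (N * r) - s1) with ((K * N - / r * s1) * r) by (field; lra). exact Ur. }
          rewrite E in U2. lra. }
  destruct (choice_fun (fun x t => A (x, t)) Tot) as [u Hu].
  pose proof PrA as [PG0 [Hadd [Hsc Hd]]].
  exists u. split; [|split; [|split]].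
  - intros x y. eapply Props_unique; [exact PrA| apply Hu | apply Hadd; apply Hu].
  - intros r x. eapply Props_unique; [exact PrA| apply Hu | apply Hsc; apply Hu].
  - intro x. apply Rabs_le. split.
    + pose proof (Hd _ _ (Hsc (-1) x (u x) (Hu x))). rewrite rscale_m1, vnorm_opp in H. lra.
    + apply Hd, Hu.
  - intros w c Hw. eapply Props_unique; [exact PrA| apply Hu | apply PG0].
    exists w, c. auto.
Qed.


Lemma Cabs_le (a b : R) : Cabs (mkC a b) <= Rabs a + Rabs b.
Proof.
  unfold Cabs; simpl. pose proof (Rabs_pos a); pose proof (Rabs_pos b).
  apply Rsqr_incr_0_var; [|lra]. unfold Rsqr.
  rewrite sqrt_sqrt by (pose proof (Rle_0_sqr a); pose proof (Rle_0_sqr b); unfold Rsqr in *; lra).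
  pose proof (Rsqr_abs a); pose proof (Rsqr_abs b); unfold Rsqr in *. nra.
Qed.

Lemma HB_point {F} (X : NormedSpace F) (W : X -> Prop) (a : X) (K : R) :
  0 <= K -> subspace X W ->
  (forall w c, W w -> sabs c <= K * vnorm X (vadd X w (vscale X c a))) ->
  exists f : X -> scal F, linear_functional X f /\ bounded_by X f (2 * K) /\
    (forall w, W w -> f w = szero F) /\ f a = sone F.
Proof.
  intros HK HW Hb.
  destruct (real_HB X W a K HK HW Hb) as [u [Hadd [Hsc [Hbd Hval]]]].
  pose proof HW as [HW0 [HWa HWs]].
  assert (Hw0 : forall w, W w -> u w = 0).
  { intros w Hw. rewrite <- (vadd0 _ X w). rewrite <- (vscale_zero_s X a).
    rewrite Hval by auto. apply sre_zero. }
  assert (Ha1 : u a = 1).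
  { rewrite <- (vadd0l X a). rewrite <- (vscale1 _ X a). rewrite Hval by auto. apply sre_one. }
  destruct F.
  - exists u. split; [split|split; [|split]].
    + exact Hadd.
    + intros c x. exact (Hsc c x).
    + intro x. simpl. pose proof (Hbd x). pose proof (vnorm_ge0 _ X x). nra.
    + intros w Hw. apply Hw0; auto.
    + exact Ha1.
  - set (i := mkC 0 1).
    assert (Hdec : forall (c : Cplx) (x : X), vscale X c x = vadd X (rscale X (cre c) x) (rscale X (cim c) (vscale X i x))).
    { intros [p q] x. unfold rscale; simpl. rewrite vscaleA, <- vscaleDl. f_equal.
      simpl. unfold Cadd, Cmul, i; simpl. f_equal; ring. }
    assert (Hu : forall (c : Cplx) (x : X), u (vscale X c x) = cre c * u x + cim c * u (vscale X i x)).
    { intros c x. rewrite Hdec, Hadd, !Hsc. reflexivity. }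
    exists (fun x => mkC (u x) (- u (vscale X i x))). split; [split|split; [|split]].
    + intros x y. simpl. unfold Cadd. simpl. rewrite vscaleDr, !Hadd. f_equal; ring.
    + intros [p q] x. rewrite vscaleA. change (@smul FC i (mkC p q)) with (Cmul i (mkC p q)). rewrite (Hu (mkC p q) x), (Hu (Cmul i (mkC p q)) x).
      apply Cplx_eq; cbn [cre cim smul Cmul i]; ring.
    + intro x. simpl. eapply Rle_trans; [apply Cabs_le|].
      pose proof (Hbd x). pose proof (Hbd (vscale X i x)).
      rewrite vnorm_scale in H0. simpl in H0.
      replace (Cabs i) with 1 in H0.
      * rewrite Rabs_Ropp. lra.
      * unfold Cabs, i; simpl. replace (0 * 0 + 1 * 1) with 1 by ring. symmetry; apply sqrt_1.
    + intros w Hw. simpl. rewrite !Hw0 by auto. f_equal; ring.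
    + simpl. rewrite Ha1. rewrite <- (vadd0l X (vscale X i a)). rewrite Hval by auto.
      simpl. f_equal; ring.
Qed.


Lemma fd_subspace {F} (A : NormedSpace F) (P : A -> Prop) : fin_dim_subspace A P -> subspace A P.
Proof.
  intros [l Hl]. pose proof (span_subspace A l) as [H0 [Ha Hs]].
  split; [apply Hl; auto|split]; intros; apply Hl; [apply Ha|apply Hs]; apply Hl; auto.
Qed.
Lemma fd_closed {F} (A : NormedSpace F) (P : A -> Prop) : fin_dim_subspace A P -> closedP A P.
Proof.
  intros [l Hl] x Hx. apply Hl. apply span_closed. intros eps He.
  destruct (Hx eps He) as [w [Hw Hd]]. exists w. split; auto. apply Hl; auto.
Qed.
Lemma chain_mono {F} (A : NormedSpace F) V : fd_chain A V -> forall n m x, (n <= m)%nat -> V n x -> V m x.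
Proof.
  intros [_ [Hs _]] n m x Hnm Hx. induction Hnm; auto.
Qed.

Lemma riesz {F} (A : NormedSpace F) V : fd_chain A V -> forall p,
  exists a, V (S p) a /\ vnorm A a = 1 /\
    forall w c, V p w -> sabs c <= 2 * vnorm A (vadd A w (vscale A c a)).
Proof.
  intros HV p. pose proof HV as [Hfd [Hs Hstr]].
  pose proof (fd_subspace A _ (Hfd p)) as HWp. pose proof (fd_subspace A _ (Hfd (S p))) as HWs.
  destruct (Hstr p) as [x [Hx1 Hx0]].
  destruct (sep_closed A (V p) x (fd_closed A _ (Hfd p)) Hx0) as [del [Hdel Hsep]].
  set (E := fun r => forall w, V p w -> r <= vdist A x w).
  destruct (completeness E) as [d [Hub Hlub]].
  { exists (vdist A x (vzero A)). intros r Hr. apply Hr. apply HWp. }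
  { exists del. exact Hsep. }
  assert (Hd1 : del <= d) by (apply Hub; exact Hsep).
  assert (Hd2 : forall w, V p w -> d <= vdist A x w).
  { intros w Hw. apply Hlub. intros r Hr. apply Hr; auto. }
  assert (Hw0 : exists w0, V p w0 /\ vdist A x w0 < 2 * d).
  { apply NNPP. intro Hno. assert (2 * d <= d); [|lra]. apply Hub. intros w Hw.
    apply Rnot_lt_le. intro Hlt. apply Hno. exists w; auto. }
  destruct Hw0 as [w0 [Hw0 Hw0d]].
  set (D := vdist A x w0). assert (HD : d <= D) by (apply Hd2; auto).
  set (a := rscale A (/ D) (vsub A x w0)).
  assert (Ha : forall v, V p v -> / 2 <= vnorm A (vadd A a v)).
  { intros v Hv.
    assert (E1 : vadd A a v = rscale A (/ D) (vsub A x (vsub A w0 (rscale A D v)))).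
    { unfold a, vsub. rewrite (vopp_add A w0), vopp_opp, (vaddA _ A x), (rscale_add_r A (/ D) (vadd A x (vopp A w0)) (rscale A D v)), rscale_mul.
      rewrite Rinv_l by lra. rewrite rscale_one. reflexivity. }
    rewrite E1, vnorm_rscale, Rabs_right by (apply Rle_ge, Rlt_le, Rinv_0_lt_compat; lra).
    assert (V p (vsub A w0 (rscale A D v))).
    { apply subspace_sub; auto. unfold rscale. apply HWp; auto. }
    pose proof (Hd2 _ H). unfold vdist in H0. fold (vsub A x (vsub A w0 (rscale A D v))) in H0.
    set (N := vnorm A (vsub A x (vsub A w0 (rscale A D v)))) in *.
    apply Rmult_le_reg_l with D; [lra|]. rewrite <- Rmult_assoc, Rinv_r by lra. assert (D < 2 * d) by exact Hw0d. lra. }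
  exists a. split; [|split].
  - unfold a, rscale. pose proof HWs as [_ [_ HSs]]. apply HSs. apply (subspace_sub A (V (S p))); [exact HWs|exact Hx1|apply Hs; exact Hw0].
  - unfold a. rewrite vnorm_rscale. assert (0 < D) by lra. change (vnorm A (vsub A x w0)) with D.
    rewrite Rabs_right by (apply Rle_ge, Rlt_le, Rinv_0_lt_compat; lra).
    field; lra.
  - intros w c Hw.
    assert (Hsep2 : forall w, V p w -> / 2 <= vdist A a w).
    { intros w' Hw'. unfold vdist. apply Ha. apply subspace_opp; auto. }
    pose proof (norm_lower A (V p) a (/ 2) HWp Hsep2 w c Hw). lra.
Qed.


Lemma rpow_nonneg e p : 0 <= rpow e p.
Proof. unfold rpow. destruct (Rle_dec e 0); [lra|]. unfold Rpower. left; apply exp_pos. Qed.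

Lemma rpow_pos_eq e p : 0 < e -> rpow e p = exp (p * ln e).
Proof. intro H. unfold rpow. destruct (Rle_dec e 0); [lra|]. reflexivity. Qed.

Lemma rpow_mono e p q r : 0 < p -> p <= q -> r <= 1 -> rpow e p < r -> rpow e q < r.
Proof.
  intros Hp Hpq Hr H. unfold rpow in *. destruct (Rle_dec e 0); auto.
  unfold Rpower in *.
  assert (p * ln e < 0).
  { apply Rnot_le_lt. intro K. assert (exp 0 <= exp (p * ln e)).
    { destruct K; [left; apply exp_increasing; auto| right; f_equal; auto]. }
    rewrite exp_0 in H0. lra. }
  assert (ln e < 0) by nra.
  eapply Rle_lt_trans; [|exact H]. destruct (Req_dec p q); [subst; lra|].
  left. apply exp_increasing. nra.
Qed.

Lemma io_or (P Q : nat -> Prop) :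
  (forall N, exists n, (N <= n)%nat /\ (P n \/ Q n)) ->
  (forall N, exists n, (N <= n)%nat /\ P n) \/ (forall N, exists n, (N <= n)%nat /\ Q n).
Proof.
  intro H. destruct (classic (forall N, exists n, (N <= n)%nat /\ P n)) as [|HP]; [left; auto|right].
  apply not_all_ex_not in HP. destruct HP as [N0 HN0].
  intro N. destruct (H (N0 + N)%nat) as [n [Hn [HPn|HQn]]].
  - exfalso. apply HN0. exists n. split; [lia|auto].
  - exists n. split; [lia|auto].
Qed.

Lemma liminf_mono (u v : nat -> R) :
  (forall n r, r <= 1 -> u n < r -> v n < r) -> liminf_lt u 1 -> liminf_lt v 1.
Proof.
  intros H [r [Hr Hio]]. exists r. split; auto. intro N. destruct (Hio N) as [n [Hn Hu]].
  exists n. split; auto. apply H; auto. lra.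
Qed.

Lemma bigO_incl (e : nat -> R) (psi phi : nat -> R) (C : R) :
  0 < C -> (forall n, 0 < phi n) -> (forall n, 0 < psi n) -> (forall n, psi n <= C * phi n) ->
  liminf_lt (fun n => rpow (e n) (psi n)) 1 -> liminf_lt (fun n => rpow (e n) (phi n)) 1.
Proof.
  intros HC Hphi Hpsi Hle [r [Hr Hio]].
  set (r0 := Rmax r (/ 2)).
  assert (Hr0 : / 2 <= r0 < 1) by (unfold r0; split; [apply Rmax_r| apply Rmax_lub_lt; lra]).
  exists (exp (ln r0 / C)). split.
  - rewrite <- exp_0. apply exp_increasing. apply Rdiv_neg_pos; auto. rewrite <- ln_1.
    apply ln_increasing; lra.
  - intro N. destruct (Hio N) as [n [Hn Hu]]. exists n. split; auto.
    assert (Hu0 : rpow (e n) (psi n) < r0) by (pose proof (Rmax_l r (/2)); unfold r0; lra).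
    unfold rpow in *. destruct (Rle_dec (e n) 0); [apply exp_pos|].
    unfold Rpower in *. apply exp_increasing.
    assert (psi n * ln (e n) < ln r0).
    { rewrite <- (ln_exp (psi n * ln (e n))). apply ln_increasing; auto. apply exp_pos. }
    assert (ln r0 < 0). { rewrite <- ln_1. apply ln_increasing; lra. }
    assert (Hln : ln (e n) < 0). { specialize (Hpsi n). nra. }
    specialize (Hle n). specialize (Hphi n). specialize (Hpsi n).
    apply Rmult_lt_reg_r with C; auto.
    replace (ln r0 / C * C) with (ln r0) by (field; lra).
    nra.
Qed.


Lemma glb_exists (S : R -> Prop) : (exists s, S s) -> (forall s, S s -> 0 <= s) -> exists e, is_glb S e.
Proof.
  intros [s0 Hs0] Hlb.
  destruct (completeness (fun v => S (- v))) as [m [Hub Hlub]].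
  { exists 0. intros v Hv. apply Hlb in Hv. lra. }
  { exists (- s0). rewrite Ropp_involutive. auto. }
  exists (- m). split.
  - intros s Hs. assert (- s <= m) by (apply Hub; rewrite Ropp_involutive; auto). lra.
  - intros m' Hm'. assert (m <= - m').
    { apply Hlub. intros v Hv. apply Hm' in Hv. lra. }
    lra.
Qed.

Definition Eset {F} (A B : NormedSpace F) (V : nat -> A -> Prop)
  (X : NormedSpace F) (iota : tens A B -> X) (n : nat) (x : X) : R -> Prop :=
  fun r => exists u : tens A B, (forall p, In p u -> V n (fst p)) /\ r = vdist X x (iota u).

Lemma En_glb {F} (A B : NormedSpace F) V X iota n x : is_glb (Eset A B V X iota n x) (En A B V X iota n x).
Proof.
  unfold En, Rinf. fold (Eset A B V X iota n x). apply epsilon_spec. apply glb_exists.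
  - exists (vdist X x (iota nil)). exists nil. split; auto. intros p [].
  - intros s [u [_ E]]. subst. apply vdist_ge0.
Qed.

Lemma En_le {F} (A B : NormedSpace F) V X iota n x u :
  (forall p, In p u -> V n (fst p)) -> En A B V X iota n x <= vdist X x (iota u).
Proof. intro H. apply (proj1 (En_glb A B V X iota n x)). exists u. auto. Qed.

Lemma En_ge {F} (A B : NormedSpace F) V X iota n x L :
  (forall u, (forall p, In p u -> V n (fst p)) -> L <= vdist X x (iota u)) -> L <= En A B V X iota n x.
Proof.
  intro H. apply (proj2 (En_glb A B V X iota n x)). intros s [u [Hu E]]. subst. auto.
Qed.

Lemma degenerate F (A B : NormedSpace F) (V : nat -> A -> Prop)
  (alpha : tens A B -> R) (X : NormedSpace F) (iota : tens A B -> X) :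
  reasonable_crossnorm A B alpha -> completion A B alpha X iota ->
  (forall b : B, b = vzero B) -> forall phi x, Bset A B V X iota phi x.
Proof.
  intros [[Hext [Hpos [H0 [Hsc Htri]]]] _] [_ [_ [_ [Hnorm Hdense]]]] Hb phi x.
  assert (Hteq : forall u : tens A B, tens_eq u nil).
  { intros u f [_ [_ [Hadd _]]].
    assert (Hf0 : forall a b, f a b = szero F).
    { intros a b. rewrite (Hb b). apply sadd_self_zero.
      rewrite <- Hadd, vadd0. reflexivity. }
    induction u as [|p u IH]; simpl; auto. rewrite IH, Hf0. apply sadd_zero_l. }
  assert (Hal : forall u, alpha u = 0).
  { intro u. rewrite (Hext u nil (Hteq u)).
    pose proof (Hsc (szero F) nil). simpl in H. rewrite sabs_zero, Rmult_0_l in H. exact H. }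
  assert (Hi : forall u, iota u = vzero X).
  { intro u. apply vnorm_eq0. rewrite Hnorm. auto. }
  assert (Hx : x = vzero X).
  { apply vnorm_eq0. apply Rle_antisym; [|apply vnorm_ge0]. apply Rnot_lt_le. intro Hp.
    destruct (Hdense x _ Hp) as [u Hu]. rewrite Hi, vnorm_dist0 in Hu. lra. }
  exists (/ 2). split; [lra|]. intro N. exists N. split; auto.
  assert (En A B V X iota N x <= 0).
  { eapply Rle_trans; [apply (En_le A B V X iota N x nil); intros p []|].
    rewrite Hi, Hx, vdist_self. lra. }
  unfold rpow. destruct (Rle_dec (En A B V X iota N x) 0); [lra|contradiction].
Qed.


Fixpoint ssum (f : nat -> R) (k : nat) : R := match k with O => 0 | S k' => ssum f k' + f k' end.

Lemma big_after (psi phi : nat -> R) : (forall n, 0 < phi n) -> (forall n, 0 < psi n) ->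
  (forall C, exists n, C * phi n < psi n) -> forall C N, exists n, (N <= n)%nat /\ C * phi n < psi n.
Proof.
  intros Hphi Hpsi H C N. apply NNPP. intro Hno.
  set (f := fun j => psi j / phi j).
  assert (Hf0 : forall j, 0 < f j) by (intro j; apply Rdiv_lt_0_compat; auto).
  assert (Hs0 : forall k, 0 <= ssum f k).
  { induction k; simpl; [lra|]. pose proof (Hf0 k). lra. }
  assert (Hsk : forall k j, (j < k)%nat -> f j <= ssum f k).
  { induction k; intros j Hj; [lia|]. simpl. destruct (Nat.eq_dec j k).
    - subst. pose proof (Hs0 k). lra.
    - pose proof (IHk j ltac:(lia)). pose proof (Hf0 k). lra. }
  set (M := Rabs C + ssum f N).
  destruct (H M) as [n Hn]. pose proof (Hphi n). pose proof (Hpsi n). pose proof (Hs0 N).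
  pose proof (Rle_abs C).
  destruct (Nat.lt_ge_cases n N) as [Hlt|Hge].
  - assert (Hj : f n <= ssum f N) by (apply Hsk; auto).
    assert (psi n <= ssum f N * phi n).
    { apply (Rmult_le_reg_r (/ phi n)). apply Rinv_0_lt_compat; auto.
      rewrite Rmult_assoc, Rinv_r by lra. rewrite Rmult_1_r. exact Hj. }
    assert (ssum f N * phi n <= M * phi n) by (apply Rmult_le_compat_r; unfold M; pose proof (Rabs_pos C); lra).
    lra.
  - apply Hno. exists n. split; auto.
    apply NNPP. intro K. apply Rnot_lt_le in K.
    assert (C * phi n <= M * phi n) by (apply Rmult_le_compat_r; unfold M; lra). lra.
Qed.

Lemma select_seq (psi phi : nat -> R) : scale_fn psi -> scale_fn phi ->
  (forall C, exists n, C * phi n < psi n) ->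
  exists m : nat -> nat, (forall k, (m k < m (S k))%nat) /\
    (forall k, (INR k + 1) * phi (m k) < psi (m k)) /\
    (forall k, / psi (m k) + ln 64 <= / psi (m (S k))).
Proof.
  intros [Hpp [Hpm Hpz]] [Hfp [Hfm Hfz]] Hbig.
  pose proof (big_after psi phi Hfp Hpp Hbig) as BA.
  assert (Hstep : forall k m, exists n, (m < n)%nat /\ (INR (S k) + 1) * phi n < psi n /\
                     / psi m + ln 64 <= / psi n).
  { intros k m.
    assert (Hpos : 0 < / psi m + ln 64).
    { pose proof (Rinv_0_lt_compat _ (Hpp m)). assert (0 < ln 64).
      { rewrite <- ln_1. apply ln_increasing; lra. } lra. }
    destruct (Hpz (/ (/ psi m + ln 64))) as [N0 HN0]. { apply Rinv_0_lt_compat; auto. }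
    destruct (BA (INR (S k) + 1) (S m + N0)%nat) as [n [Hn Hr]].
    exists n. split; [lia|split; auto].
    specialize (HN0 n ltac:(lia)). pose proof (Hpp n).
    rewrite <- (Rinv_inv (/ psi m + ln 64)). apply Rlt_le. apply Rinv_lt_contravar; auto.
    apply Rmult_lt_0_compat; auto. apply Rinv_0_lt_compat; auto. }
  destruct (choice_fun (fun km n => (snd km < n)%nat /\ (INR (S (fst km)) + 1) * phi n < psi n /\
                     / psi (snd km) + ln 64 <= / psi n)) as [st Hst].
  { intros [k m]. apply Hstep. }
  destruct (Hbig 1) as [m0 Hm0].
  set (m := fix m (k : nat) : nat := match k with O => m0 | S k' => st (k', m k') end).
  exists m. split; [|split].
  - intro k. simpl. apply (Hst (k, m k)).
  - intro k. destruct k as [|k].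
    + simpl. replace (0 + 1) with 1 by ring. exact Hm0.
    + simpl m. apply (Hst (k, m k)).
  - intro k. simpl. apply (Hst (k, m k)).
Qed.


Lemma tsum_app {F} {A B : NormedSpace F} (f : A -> B -> scal F) (u v : tens A B) :
  tsum f (u ++ v) = sadd (tsum f u) (tsum f v).
Proof.
  induction u as [|q u IH]; simpl.
  - rewrite sadd_zero_l. reflexivity.
  - unfold tsum in *. simpl. rewrite IH. apply sadd_assoc.
Qed.

Lemma tsum_cons {F} {A B : NormedSpace F} (f : A -> B -> scal F) (q : vT A * vT B) (u : tens A B) :
  tsum f (q :: u) = sadd (f (fst q) (snd q)) (tsum f u).
Proof. reflexivity. Qed.
Lemma tscale_cons {F} {A B : NormedSpace F} c (q : vT A * vT B) (u : tens A B) :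
  tscale c (q :: u) = (vscale A c (fst q), snd q) :: tscale c u.
Proof. reflexivity. Qed.

Lemma tsum_tscale_zero {F} {A B : NormedSpace F} (f : A -> scal F) (g : B -> scal F) c (u : tens A B) :
  linear_functional A f -> (forall q, In q u -> f (fst q) = szero F) ->
  tsum (fun a b => smul (f a) (g b)) (tscale c u) = szero F.
Proof.
  intros [_ Hfs] Hu. induction u as [|q u IH]; [reflexivity|].
  rewrite tscale_cons, tsum_cons, IH by (intros; apply Hu; right; auto). simpl.
  rewrite Hfs, Hu by (left; auto). rewrite smul_zero_r, smul_zero_l. apply sadd_zero_l.
Qed.

Lemma vdist_add_self {F} (X : NormedSpace F) (s d : X) : vdist X (vadd X s d) s = vnorm X d.
Proof. unfold vdist. rewrite <- vaddA, (vaddC _ X d), vaddA, vaddN, vadd0l. reflexivity. Qed.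

Lemma le_eps (a b : R) : (forall eps, 0 < eps -> a < b + eps) -> a <= b.
Proof. intro H. apply Rnot_lt_le. intro K. specialize (H (a - b)). lra. Qed.

Lemma mono_strict (m : nat -> nat) : (forall k, (m k < m (S k))%nat) -> forall j k, (j <= k)%nat -> (m j <= m k)%nat.
Proof. intros H j k Hjk. induction Hjk; auto. specialize (H m0). lia. Qed.
Lemma mono_ge (m : nat -> nat) : (forall k, (m k < m (S k))%nat) -> forall k, (k <= m k)%nat.
Proof. intros H k. induction k; [lia|]. specialize (H k). lia. Qed.

Lemma block (m : nat -> nat) : (forall k, (m k < m (S k))%nat) -> forall K1 n, (m K1 <= n)%nat ->
  exists k, (K1 <= k)%nat /\ (m k <= n)%nat /\ (n < m (S k))%nat.
Proof.
  intros H K1 n Hn.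
  assert (forall d, (n < m (K1 + d))%nat -> exists k, (K1 <= k)%nat /\ (m k <= n)%nat /\ (n < m (S k))%nat).
  { induction d as [|d IH]; intro Hd.
    - rewrite Nat.add_0_r in Hd. lia.
    - destruct (Nat.lt_ge_cases n (m (K1 + d)%nat)) as [Hl|Hg]; auto.
      exists (K1 + d)%nat. split; [lia|split; auto]. replace (S (K1 + d)%nat) with (K1 + S d)%nat by lia. auto. }
  apply (H0 (S n)). pose proof (mono_ge m H (K1 + S n)). lia.
Qed.

Lemma exp_m1_lt : exp (-1) < / 2.
Proof.
  replace (exp (-1)) with (/ exp 1) by (rewrite <- exp_Ropp; f_equal; ring). apply Rinv_lt_contravar; [pose proof (exp_pos 1); lra|].
  pose proof (exp_ineq1 1 ltac:(lra)). lra.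
Qed.

Lemma lethargy F (A B : NormedSpace F) (V : nat -> A -> Prop)
  (alpha : tens A B -> R) (X : NormedSpace F) (iota : tens A B -> X) :
  fd_chain A V -> reasonable_crossnorm A B alpha -> completion A B alpha X iota ->
  forall psi phi, scale_fn psi -> scale_fn phi -> (forall C, exists n, C * phi n < psi n) ->
  (exists b : B, b <> vzero B) ->
  exists y, Bset A B V X iota psi y /\ ~ Bset A B V X iota phi y.
Proof.
  intros Hch Hrc Hcp psi phi Hpsi Hphi Hbig [b1 Hb1].
  destruct Hcp as [HbX [Hiapp [Hisc [Hinorm Hidense]]]].
  destruct Hrc as [Htn [Hcross Hfg]].
  pose proof Hpsi as [Hpp [Hpm Hpz]]. pose proof Hphi as [Hfp [Hfm Hfz]].
  pose proof Hch as [Hfd [Hsucc Hstr]].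
  assert (Hb1p : 0 < vnorm B b1).
  { destruct (vnorm_ge0 _ B b1); auto. exfalso. apply Hb1, vnorm_eq0. auto. }
  set (b0 := rscale B (/ (2 * vnorm B b1)) b1).
  assert (Hb0 : vnorm B b0 = / 2).
  { unfold b0. rewrite vnorm_rscale, Rabs_right.
    - field. lra.
    - apply Rle_ge. left. apply Rinv_0_lt_compat. lra. }
  destruct (HB_point B (fun x => x = vzero B) b0 2) as [g [Hgl [Hgb [_ Hg1]]]].
  { lra. }
  { split; [reflexivity|split]; intros; subst; [apply vadd0| apply vscale_zero_v]. }
  { intros w c Hw. subst. rewrite vadd0l, vnorm_scale, Hb0. pose proof (sabs_ge0 F c). lra. }
  replace (2 * 2) with 4 in Hgb by ring.
  assert (Hfa : forall p, exists q : vT A * (A -> scal F), V (S p) (fst q) /\ vnorm A (fst q) = 1 /\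
            linear_functional A (snd q) /\ bounded_by A (snd q) 4 /\
            (forall w, V p w -> snd q w = szero F) /\ snd q (fst q) = sone F).
  { intro p. destruct (riesz A V Hch p) as [a [Ha1 [Ha2 Ha3]]].
    destruct (HB_point A (V p) a 2) as [f [Hf1 [Hf2 [Hf3 Hf4]]]]; [lra| apply fd_subspace; auto| auto|].
    exists (a, f). simpl. replace 4 with (2 * 2) by ring. repeat split; auto; apply Hf1. }
  destruct (choice_fun _ Hfa) as [af Haf].
  destruct (select_seq psi phi Hpsi Hphi Hbig) as [m [Hmi [Hmr Hmh]]].
  pose proof (mono_strict m Hmi) as Hmm. pose proof (mono_ge m Hmi) as Hmg.
  set (c := fun k => exp (- / psi (m k))).
  assert (Hc0 : forall k, 0 < c k) by (intro k; apply exp_pos).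
  assert (Hc1 : forall k, c k < 1).
  { intro k. unfold c. rewrite <- exp_0. apply exp_increasing.
    pose proof (Rinv_0_lt_compat _ (Hpp (m k))). lra. }
  assert (Hc64 : forall k, c (S k) <= c k / 64).
  { intro k. specialize (Hmh k).
    replace (c k / 64) with (exp (- / psi (m k) - ln 64)).
    - unfold c. destruct (Req_dec (- / psi (m (S k))) (- / psi (m k) - ln 64)) as [E|E].
      + rewrite E. lra.
      + left. apply exp_increasing. lra.
    - unfold Rminus. rewrite exp_plus, (exp_Ropp (ln 64)), exp_ln by lra. unfold c. field. }
  assert (Hcdec : forall i j, (i <= j)%nat -> c j <= c i).
  { intros i j Hij. induction Hij; [lra|]. pose proof (Hc64 m0). pose proof (Hc0 m0). lra. }
  assert (Hcinv : forall k, c k <= / (INR k + 1)).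
  { induction k.
    - simpl. replace (0 + 1) with 1 by ring. rewrite Rinv_1. left; apply Hc1.
    - pose proof (Hc64 k). rewrite S_INR. pose proof (pos_INR k).
      apply Rle_trans with (/ (INR k + 1) / 64); [lra|].
      unfold Rdiv. rewrite <- Rinv_mult. apply Rinv_le_contravar; lra. }
  set (p := fun k => pred (m (S k))).
  assert (Hp : forall k, S (p k) = m (S k)).
  { intro k. unfold p. specialize (Hmi k). lia. }
  set (a := fun k => fst (af (p k))). set (fk := fun k => snd (af (p k))).
  set (t := fun k => (rscale A (c k) (a k), b0)).
  set (T := fix T (K : nat) : tens A B := match K with O => t O :: nil | S K' => T K' ++ t (S K') :: nil end).
  set (Sx := fun K => iota (T K)).
  assert (HVsub : forall n, subspace A (V n)) by (intro n; apply fd_subspace; auto).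
  assert (Hta : forall k, V (m (S k)) (fst (t k))).
  { intro k. simpl. rewrite <- Hp. unfold rscale. apply HVsub. unfold a. apply (Haf (p k)). }
  assert (HT1 : forall K q, In q (T K) -> V (m (S K)) (fst q)).
  { induction K as [|K IH]; intros q Hq.
    - simpl in Hq. destruct Hq as [E|[]]. subst. apply Hta.
    - change (In q (T K ++ t (S K) :: nil)) in Hq. apply in_app_or in Hq. destruct Hq as [Hq|[E|[]]].
      + apply (chain_mono A V Hch (m (S K))); [apply Hmm; lia|]. auto.
      + subst. apply Hta. }
  assert (Hstep : forall K, vdist X (Sx (S K)) (Sx K) <= c (S K) / 2).
  { intro K. unfold Sx. change (T (S K)) with (T K ++ t (S K) :: nil). rewrite Hiapp, vdist_add_self, Hinorm.
    eapply Rle_trans; [apply Hcross|]. rewrite Hb0. unfold rscale. rewrite vnorm_scale, sabs_emb.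
    unfold a. rewrite (proj1 (proj2 (Haf (p (S K))))). rewrite Rabs_right by (left; apply Hc0). lra. }
  assert (Hcau : forall L d, vdist X (Sx (L + d)%nat) (Sx L) <= 32 / 63 * (c (S L) - c (S (L + d)))).
  { intros L d. induction d as [|d IH].
    - rewrite Nat.add_0_r, vdist_self. lra.
    - replace (L + S d)%nat with (S (L + d)) by lia.
      eapply Rle_trans; [apply (vdist_tri X _ (Sx (L + d)%nat))|].
      pose proof (Hstep (L + d)%nat). pose proof (Hc64 (S (L + d))). lra. }
  assert (Hcau2 : forall L K, (L <= K)%nat -> vdist X (Sx K) (Sx L) <= 32 / 63 * c (S L)).
  { intros L K HLK. replace K with (L + (K - L))%nat by lia. pose proof (Hcau L (K - L)%nat).
    pose proof (Hc0 (S (L + (K - L)))). lra. }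
  destruct (HbX Sx) as [y Hy].
  { intros eps He. destruct (inv_small eps He) as [N HN]. exists N. intros i j Hi Hj.
    assert (forall L K, (N <= L)%nat -> (L <= K)%nat -> vdist X (Sx K) (Sx L) < eps).
    { intros L K HL HLK. eapply Rle_lt_trans; [apply Hcau2; auto|].
      pose proof (Hcdec N (S L) ltac:(lia)). pose proof (Hcinv N). pose proof (HN N (le_n N)).
      pose proof (Hc0 (S L)). lra. }
    destruct (Nat.le_ge_cases i j).
    - rewrite vdist_sym. auto.
    - auto. }
  assert (Hyl : forall L, vdist X y (Sx L) <= 32 / 63 * c (S L)).
  { intro L. apply le_eps. intros eps He. destruct (Hy eps He) as [N HN].
    pose proof (HN (N + L)%nat ltac:(lia)). pose proof (Hcau2 L (N + L)%nat ltac:(lia)).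
    pose proof (vdist_tri X y (Sx (N + L)%nat) (Sx L)). rewrite vdist_sym in H. lra. }
  assert (Hlow : forall k n, (n <= p k)%nat -> c k / 20 <= En A B V X iota n y).
  { intros k n Hn. apply En_ge. intros u Hu.
    set (Phi := fun (a0 : A) (b : B) => smul (fk k a0) (g b)).
    assert (Hfkl : linear_functional A (fk k)) by (apply (Haf (p k))).
    assert (Hfkb : bounded_by A (fk k) 4) by (apply (Haf (p k))).
    assert (Hfk0 : forall w, V (p k) w -> fk k w = szero F) by (apply (Haf (p k))).
    assert (Hfk1 : fk k (a k) = sone F) by (apply (Haf (p k))).
    set (w := T k ++ tscale (emb F (-1)) u).
    pose proof (Hfg (fk k) g 4 4 Hfkl Hgl Hfkb Hgb w) as Hw. fold Phi in Hw.
    assert (Ealpha : alpha w = vdist X (Sx k) (iota u)).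
    { rewrite <- Hinorm. unfold w. rewrite Hiapp, Hisc, vscale_m1. reflexivity. }
    assert (Hu0 : tsum Phi (tscale (emb F (-1)) u) = szero F).
    { apply tsum_tscale_zero; auto. intros q Hq. apply Hfk0.
      apply (chain_mono A V Hch n); auto. }
    assert (Hterm : sre F (Phi (fst (t k)) (snd (t k))) = c k).
    { unfold Phi, t, fst, snd. destruct Hfkl as [_ Hfks].
      unfold rscale. rewrite Hfks, Hfk1, Hg1, !smul_one_r. apply sre_emb. }
    assert (Hzero : forall j, (j < k)%nat -> Phi (fst (t j)) (snd (t j)) = szero F).
    { intros j Hj. unfold Phi, t, fst, snd. destruct Hfkl as [_ Hfks]. unfold rscale. rewrite Hfks, Hfk0.
      - rewrite smul_zero_r. apply smul_zero_l.
      - apply (chain_mono A V Hch (m (S j))).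
        + unfold p. pose proof (Hmm (S j) k ltac:(lia)). pose proof (Hmi k). lia.
        + rewrite <- Hp. apply (Haf (p j)). }
    assert (Hnil : tsum Phi nil = szero F) by reflexivity.
    assert (HT0 : forall K, (K < k)%nat -> sre F (tsum Phi (T K)) = 0).
    { induction K as [|K IH]; intro HK.
      - change (T 0%nat) with (t 0%nat :: nil). rewrite tsum_cons, Hnil, sre_add, Hzero by auto.
        rewrite sre_zero. ring.
      - change (T (S K)) with (T K ++ t (S K) :: nil). rewrite tsum_app, sre_add, IH by lia.
        rewrite tsum_cons, Hnil, sre_add, Hzero by auto. rewrite sre_zero. ring. }
    assert (HTk : sre F (tsum Phi (T k)) = c k).
    { destruct k as [|k'].
      - change (T 0%nat) with (t 0%nat :: nil). rewrite tsum_cons, Hnil, sre_add, Hterm, sre_zero. ring.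
      - change (T (S k')) with (T k' ++ t (S k') :: nil). rewrite tsum_app, sre_add, HT0 by lia.
        rewrite tsum_cons, Hnil, sre_add, Hterm, sre_zero. ring. }
    assert (Hlow1 : c k <= 16 * vdist X (Sx k) (iota u)).
    { rewrite <- Ealpha. replace 16 with (4 * 4) by ring. eapply Rle_trans; [|exact Hw].
      unfold w. rewrite tsum_app, Hu0, sadd_zero_r, <- HTk.
      pose proof (sre_le_abs F (tsum Phi (T k))). pose proof (Rle_abs (sre F (tsum Phi (T k)))). lra. }
    pose proof (vdist_tri X (Sx k) y (iota u)). pose proof (Hyl k). rewrite vdist_sym in H0.
    pose proof (Hc64 k). pose proof (Hc0 k). pose proof (Hc0 (S k)). lra. }
  assert (Hup : forall k, En A B V X iota (m (S k)) y <= c (S k)).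
  { intro k. eapply Rle_trans; [apply (En_le A B V X iota (m (S k)) y (T k)); apply HT1|].
    pose proof (Hyl k). pose proof (Hc0 (S k)). fold (Sx k). lra. }
  exists y. split.
  - exists (/ 2). split; [lra|]. intro N. exists (m (S N)). split; [pose proof (Hmg (S N)); lia|].
    specialize (Hup N). unfold rpow. destruct (Rle_dec (En A B V X iota (m (S N)) y) 0); [lra|].
    unfold Rpower. eapply Rle_lt_trans; [|apply exp_m1_lt].
    assert (ln (En A B V X iota (m (S N)) y) <= ln (c (S N))).
    { destruct (Req_dec (En A B V X iota (m (S N)) y) (c (S N))) as [E|E]; [rewrite E; lra|].
      left. apply ln_increasing; lra. }
    unfold c in H. rewrite ln_exp in H.
    pose proof (Hpp (m (S N))).
    destruct (Req_dec (psi (m (S N)) * ln (En A B V X iota (m (S N)) y)) (-1)) as [E|E]; [rewrite E; lra|].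
    left. apply exp_increasing.
    apply Rmult_le_compat_l with (r := psi (m (S N))) in H; [|lra].
    replace (psi (m (S N)) * - / psi (m (S N))) with (-1) in H by (field; lra). lra.
  - intros [r [Hr Hio]].
    destruct (Rle_dec r 0) as [Hr0|Hr0].
    { destruct (Hio 0%nat) as [n [_ Hn]]. pose proof (rpow_nonneg (En A B V X iota n y) (phi n)). lra. }
    set (eps := - ln r).
    assert (Heps : 0 < eps). { unfold eps. assert (ln r < ln 1) by (apply ln_increasing; lra). rewrite ln_1 in H. lra. }
    destruct (inv_small (eps / 2)) as [K0 HK0]; [lra|].
    assert (Hl20 : 0 < ln 20) by (rewrite <- ln_1; apply ln_increasing; lra).
    destruct (Hfz (eps / (2 * ln 20))) as [N1 HN1]. { apply Rdiv_lt_0_compat; lra. }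
    destruct (Hio (m (K0 + N1)%nat)) as [n [Hn Hrn]].
    destruct (block m Hmi (K0 + N1)%nat n Hn) as [k [Hk1 [Hk2 Hk3]]].
    assert (Hnp : (n <= p k)%nat) by (unfold p; lia).
    pose proof (Hlow k n Hnp) as Hl. set (E := En A B V X iota n y) in *.
    pose proof (Hc0 k). assert (HE : 0 < E) by lra.
    rewrite rpow_pos_eq in Hrn by auto.
    assert (Hln : ln (c k / 20) <= ln E).
    { destruct (Req_dec (c k / 20) E) as [Q|Q]; [rewrite Q; lra|]. left. apply ln_increasing; lra. }
    unfold Rdiv in Hln. rewrite ln_mult in Hln by lra. rewrite ln_Rinv in Hln by lra.
    unfold c in Hln. rewrite ln_exp in Hln.
    pose proof (Hfp n) as Hphin. pose proof (Hfm (m k) n Hk2) as Hphimon.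
    pose proof (Hmr k) as Hrat. pose proof (Hpp (m k)) as Hpsik. pose proof (Hfp (m k)) as Hphik.
    assert (Hr1 : phi (m k) * / psi (m k) < eps / 2).
    { apply Rlt_le_trans with (/ (INR k + 1)); [|left; apply HK0; lia].
      pose proof (pos_INR k).
      apply (Rmult_lt_reg_r (psi (m k) * (INR k + 1))); [nra|].
      replace (phi (m k) * / psi (m k) * (psi (m k) * (INR k + 1))) with ((INR k + 1) * phi (m k)) by (field; lra).
      replace (/ (INR k + 1) * (psi (m k) * (INR k + 1))) with (psi (m k)) by (field; lra). lra. }
    assert (Hr2 : phi n * ln 20 < eps / 2).
    { specialize (HN1 n ltac:(pose proof (Hmg k); lia)).
      apply (Rmult_lt_compat_r (ln 20)) in HN1; auto.
      replace (eps / (2 * ln 20) * ln 20) with (eps / 2) in HN1 by (field; lra). lra. }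
    assert (Hkey : - eps < phi n * ln E).
    { assert (phi n * (- / psi (m k) + - ln 20) <= phi n * ln E) by (apply Rmult_le_compat_l; lra).
      assert (phi n * / psi (m k) <= phi (m k) * / psi (m k)).
      { apply Rmult_le_compat_r; auto. left. apply Rinv_0_lt_compat; auto. }
      lra. }
    assert (Hfin : exp (- eps) < exp (phi n * ln E)) by (apply exp_increasing; auto).
    unfold eps in Hfin. rewrite Ropp_involutive, exp_ln in Hfin by lra. lra.
Qed.


Theorem corollary2p3 (F : Fld) (A B : NormedSpace F) (V : nat -> A -> Prop)
  (alpha : tens A B -> R) (X : NormedSpace F) (iota : tens A B -> X) :
  banach A -> separable A -> infinite_dim A ->
  fd_chain A V -> dense_union A V ->
  banach B ->
  reasonable_crossnorm A B alpha ->
  completion A B alpha X iota ->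
  forall phi1 phi2 : nat -> R, scale_fn phi1 -> scale_fn phi2 ->
  let Bs := Bset A B V X iota in
  let phimax := fun n => Rmax (phi1 n) (phi2 n) in
  let phimin := fun n => Rmin (phi1 n) (phi2 n) in
  (* (i) join *)
  (forall x, Bs phimax x <-> Bs phi1 x \/ Bs phi2 x) /\
  (forall psi, scale_fn psi ->
     (forall x, Bs phi1 x -> Bs psi x) -> (forall x, Bs phi2 x -> Bs psi x) ->
     forall x, Bs phimax x -> Bs psi x) /\
  (* (ii) meet *)
  (forall x, Bs phimin x -> Bs phi1 x) /\
  (forall x, Bs phimin x -> Bs phi2 x) /\
  (forall psi, scale_fn psi ->
     (forall x, Bs psi x -> Bs phi1 x) -> (forall x, Bs psi x -> Bs phi2 x) ->
     forall x, Bs psi x -> Bs phimin x) /\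
  (forall x, Bs phimin x -> Bs phi1 x /\ Bs phi2 x).
Proof.
  intros HbA HsA HiA Hch Hdu HbB Hrc Hcp phi1 phi2 Hs1 Hs2 Bs phimax phimin.
  pose proof Hs1 as [Hp1 [Hm1 Hz1]]. pose proof Hs2 as [Hp2 [Hm2 Hz2]].
  assert (Hmax : forall x, Bs phimax x <-> Bs phi1 x \/ Bs phi2 x).
  { intro x. unfold Bs, Bset. split.
    - intros [r [Hr Hio]].
      destruct (io_or (fun n => rpow (En A B V X iota n x) (phi1 n) < r)
                      (fun n => rpow (En A B V X iota n x) (phi2 n) < r)) as [H|H].
      + intro N. destruct (Hio N) as [n [Hn Hu]]. exists n. split; auto.
        unfold phimax in Hu. destruct (Rle_dec (phi1 n) (phi2 n)).
        * rewrite Rmax_right in Hu by lra. auto.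
        * rewrite Rmax_left in Hu by lra. auto.
      + left. exists r. split; auto.
      + right. exists r. split; auto.
    - intros [H|H]; eapply liminf_mono; try exact H; intros n r Hr Hu; eapply rpow_mono; try exact Hu; auto.
      + apply Rmax_l.
      + apply Rmax_r. }
  assert (Hmin1 : forall x, Bs phimin x -> Bs phi1 x).
  { intros x H. eapply liminf_mono; [|exact H]. intros n r Hr Hu. eapply rpow_mono; try exact Hu; auto.
    - unfold phimin. apply Rmin_glb_lt; auto.
    - apply Rmin_l. }
  assert (Hmin2 : forall x, Bs phimin x -> Bs phi2 x).
  { intros x H. eapply liminf_mono; [|exact H]. intros n r Hr Hu. eapply rpow_mono; try exact Hu; auto.
    - unfold phimin. apply Rmin_glb_lt; auto.
    - apply Rmin_r. }
  split; [exact Hmax|split; [|split; [exact Hmin1|split; [exact Hmin2|split]]]].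
  - intros psi Hpsi H1 H2 x Hx. apply Hmax in Hx. destruct Hx; auto.
  - intros psi Hpsi H1 H2 x Hx.
    destruct (classic (exists b : B, b <> vzero B)) as [Hnt|Htr].
    2: { apply (degenerate F A B V alpha X iota Hrc Hcp). intro b. apply NNPP. intro K. apply Htr. exists b; auto. }
    pose proof Hpsi as [Hpp [Hpm Hpz]].
    assert (HC : forall phi, scale_fn phi -> (forall y, Bs psi y -> Bs phi y) ->
                 exists C, 0 < C /\ forall n, psi n <= C * phi n).
    { intros phi Hphi Hinc. apply NNPP. intro Hno.
      assert (Hbig : forall C, exists n, C * phi n < psi n).
      2: { destruct (lethargy F A B V alpha X iota Hch Hrc Hcp psi phi Hpsi Hphi Hbig Hnt) as [y [Hy1 Hy2]].
           apply Hy2, Hinc, Hy1. }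
      intro C. destruct (Rle_dec C 0).
      - exists 0%nat. pose proof (Hpp 0%nat). pose proof (proj1 Hphi 0%nat). nra.
      - apply NNPP. intro K. apply Hno. exists C. split; [lra|]. intro m.
        apply Rnot_lt_le. intro K2. apply K. exists m; auto. }
    destruct (HC phi1 Hs1 H1) as [C1 [HC1 Hle1]]. destruct (HC phi2 Hs2 H2) as [C2 [HC2 Hle2]].
    apply (bigO_incl (fun n => En A B V X iota n x) psi phimin (C1 + C2)); auto.
    + lra.
    + intro n. unfold phimin. apply Rmin_glb_lt; auto.
    + intro n. unfold phimin. specialize (Hle1 n). specialize (Hle2 n). pose proof (Hp1 n). pose proof (Hp2 n).
      destruct (Rle_dec (phi1 n) (phi2 n)).
      * rewrite Rmin_left by lra. nra.
      * rewrite Rmin_right by lra. nra.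
  - intros x H. split; auto.
Qed.
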